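(* Let $I$ and ${\cal Q}_I$ be as in the context, let $G'$ be a chordal sandwich of $({\rm int^*}({\cal Q}_I),{\rm forb}({\cal Q}_I))$, and let $1\le i\le n$. Then: (a) there is $W\in\{v_i,\overline{v_i}\}$ such that for all $j\in\Delta_i$, the vertex $K^j_W$ is adjacent to $B$ in $G'$; (b) for each $j\in\Delta_i$ and each $W\in\{v_i,\overline{v_i}\}$, if $K^j_W$ is adjacent to $B$ in $G'$, then each of the vertices $S^j_W$, $K^j_W$, and $L^j_W$ (if $L^j_W$ is defined) is adjacent in $G'$ to each of $B$, $A_i$, $H_W$, $H_{\overline W}$, $F^j$.
   Context: Instance: $I$ has variables $v_1,\ldots,v_n$ and clauses ${\cal C}_1,\ldots,{\cal C}_m$; each clause is an ordered triple of literals ${\cal C}_j=X\vee Y\vee Z$ with no variable occurring twice in a clause. Literals are $v_i$ or $\overline{v_i}$; $\overline W$ is the negation of $W$. $\Delta_i$ is the set of $j$ such that $v_i$ or $\overline{v_i}$ occurs in ${\cal C}_j$. Ground set ${\cal X}_I$: $\alpha_{v_i},\alpha_{\overline{v_i}}$; $\beta^j_{v_i},\beta^j_{\overline{v_i}}$ ($j\in\Delta_i$); $\gamma^j_1,\gamma^j_2,\gamma^j_3,\lambda^j$ ($1\le j\le m$); $\delta,\mu$. Sets: $B=\{\mu,\delta\}$, $H_{v_i}=\{\alpha_{v_i},\delta\}$, $H_{\overline{v_i}}=\{\alpha_{\overline{v_i}},\delta\}$, $A_i=\{\alpha_{v_i},\alpha_{\overline{v_i}}\}$, $S^j_{v_i}=\{\alpha_{v_i},\beta^j_{v_i}\}$,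 $S^j_{\overline{v_i}}=\{\alpha_{\overline{v_i}},\beta^j_{\overline{v_i}}\}$ ($j\in\Delta_i$); for ${\cal C}_j=X\vee Y\vee Z$: $K^j_{\overline X}=\{\beta^j_X,\gamma^j_1\}$, $K^j_{\overline Y}=\{\beta^j_Y,\gamma^j_2\}$, $K^j_{\overline Z}=\{\beta^j_Z,\gamma^j_3\}$, $K^j_X=\{\beta^j_{\overline X},\lambda^j\}$, $K^j_Y=\{\beta^j_{\overline Y},\lambda^j\}$, $K^j_Z=\{\beta^j_{\overline Z},\lambda^j\}$, $L^j_X=\{\beta^j_{\overline X},\gamma^j_2\}$, $L^j_Y=\{\beta^j_{\overline Y},\gamma^j_3\}$, $L^j_Z=\{\beta^j_{\overline Z},\gamma^j_1\}$ (so $L^j_W$ is defined only for the three literals $W$ occurring in ${\cal C}_j$), $D^j_p=\{\gamma^j_p,\lambda^j\}$, $F^j=\{\lambda^j,\mu\}$. Objects indexed by a literal mean the one for that literal. ${\cal Q}_I$ is the collection of partial splits: $A_i|B$; $D^j_p|B$ ($p=1,2,3$); $S^j_{v_i}|S^{j'}_{\overline{v_i}}$ ($j,j'\in\Delta_i$); $S^j_{v_i}|K^{j'}_{\overline{v_i}}$, $S^j_{\overline{v_i}}|K^{j'}_{v_i}$ ($j<j'$ in $\Delta_i$); $K^j_{\overline{v_i}}|F^{j'}$, $K^j_{v_i}|F^{j'}$ ($j\in\Delta_i$, $j<j'\le m$); $H_{v_{i'}}|S^j_{v_i}$, $H_{\overline{v_{i'}}}|S^j_{v_i}$, $H_{v_{i'}}|S^j_{\overline{v_i}}$,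 $H_{\overline{v_{i'}}}|S^j_{\overline{v_i}}$ ($1\le i'<i\le n$, $j\in\Delta_i$); $H_{\overline{v_i}}|F^j$, $H_{v_i}|F^j$ (all $i,j$); for each ${\cal C}_j=X\vee Y\vee Z$: $K^j_{\overline X}|K^j_X$, $K^j_{\overline Y}|K^j_Y$, $K^j_{\overline Z}|K^j_Z$, $K^j_{\overline X}|L^j_X$, $K^j_{\overline Y}|L^j_Y$, $K^j_{\overline Z}|L^j_Z$, $S^j_Y|K^j_X$, $S^j_Z|K^j_Y$, $S^j_X|K^j_Z$, $S^j_Z|L^j_X$, $S^j_X|L^j_Y$, $S^j_Y|L^j_Z$. ${\rm int^*}({\cal Q}_I)$: vertices are the 2-sets occurring as cells of members of ${\cal Q}_I$, adjacent iff they intersect. ${\rm forb}({\cal Q}_I)$: same vertices, $P,P'$ adjacent iff $P|P'\in{\cal Q}_I$. A chordal sandwich of $(G_1,G_2)$ (edge-disjoint, same vertex set) is a chordal graph (no induced cycle of length $\ge4$) on that vertex set containing all edges of $G_1$ and none of $G_2$. *)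

(* Defs.v *)
From HB Require Import structures.
From mathcomp Require Import all_boot.
From mathcomp Require Import finmap.
Set Implicit Arguments. Unset Strict Implicit. Unset Printing Implicit Defensive.
Local Open Scope fset_scope.

(* A literal is (i, b): b = true means v_i, b = false means ~v_i. *)
Definition lit := (nat * bool)%type.
Definition negl (W : lit) : lit := (W.1, ~~ W.2).
Definition posv (i : nat) : lit := (i, true).
Definition negv (i : nat) : lit := (i, false).

(* A clause is an ordered triple X \/ Y \/ Z. *)
Definition clause := (lit * lit * lit)%type.

Inductive elt :=
| EAlpha of lit
| EBeta of nat & lit
| EGamma of nat & nat
| ELambda of nat
| EDelta
| EMu.

Definition elt_code (e : elt) : (lit + (nat * lit) + (nat * nat) + nat + bool)%type :=
  match e with
  | EAlpha l => inl (inl (inl (inl l)))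
  | EBeta j l => inl (inl (inl (inr (j, l))))
  | EGamma j p => inl (inl (inr (j, p)))
  | ELambda j => inl (inr j)
  | EDelta => inr true
  | EMu => inr false
  end.
Definition elt_decode (c : (lit + (nat * lit) + (nat * nat) + nat + bool)%type) : elt :=
  match c with
  | inl (inl (inl (inl l))) => EAlpha l
  | inl (inl (inl (inr (j, l)))) => EBeta j l
  | inl (inl (inr (j, p))) => EGamma j p
  | inl (inr j) => ELambda j
  | inr true => EDelta
  | inr false => EMu
  end.
Lemma elt_codeK : cancel elt_code elt_decode. Proof. by case. Qed.
HB.instance Definition _ := Countable.copy elt (can_type elt_codeK).

Definition vtx := {fset elt}.

Section Construction.
Variables (n : nat) (cl : seq clause).

Definition m := size cl.
Definition dclause : clause := ((0, true), (0, true), (0, true)).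
(* C_j, for 1 <= j <= m *)
Definition clause_of (j : nat) : clause := nth dclause cl j.-1.
Definition lit_at (j p : nat) : lit :=
  let: (X, Y, Z) := clause_of j in
  match p with 1 => X | 2 => Y | _ => Z end.
Definition pos (j : nat) (W : lit) : option nat :=
  let: (X, Y, Z) := clause_of j in
  if X.1 == W.1 then Some 1 else if Y.1 == W.1 then Some 2
  else if Z.1 == W.1 then Some 3 else None.

Definition inDelta (i j : nat) : bool :=
  (1 <= j <= m) && (pos j (posv i) != None).

Definition wf_lit (W : lit) : bool := (1 <= W.1 <= n).
Definition wf_clause (c : clause) : bool :=
  let: (X, Y, Z) := c in
  [&& wf_lit X, wf_lit Y, wf_lit Z, X.1 != Y.1, X.1 != Z.1 & Y.1 != Z.1].
Definition wf_instance : bool := all wf_clause cl.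

Definition B : vtx := [fset EMu; EDelta].
Definition H (W : lit) : vtx := [fset EAlpha W; EDelta].
Definition A (i : nat) : vtx := [fset EAlpha (posv i); EAlpha (negv i)].
Definition S (j : nat) (W : lit) : vtx := [fset EAlpha W; EBeta j W].
(* K^j_W for W with variable in C_j: if W is the literal at position p,
   K^j_W = {beta^j_{~W}, lambda^j}; if ~W is the literal at position p,
   K^j_W = {beta^j_{~W}, gamma^j_p}.  (Junk fset0 if undefined; never used.) *)
Definition K (j : nat) (W : lit) : vtx :=
  match pos j W with
  | Some p => if lit_at j p == W then [fset EBeta j (negl W); ELambda j]
              else [fset EBeta j (negl W); EGamma j p]
  | None => fset0
  end.
(* L^j_W, defined only for literals W occurring in C_j:
   L^j_X = {beta_{~X}, gamma_2}, L^j_Y = {beta_{~Y}, gamma_3},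
   L^j_Z = {beta_{~Z}, gamma_1} *)
Definition Lopt (j : nat) (W : lit) : option vtx :=
  match pos j W with
  | Some p => if lit_at j p == W
              then Some [fset EBeta j (negl W); EGamma j (p %% 3).+1]
              else None
  | None => None
  end.
Definition L (j : nat) (W : lit) : vtx := odflt fset0 (Lopt j W).
Definition D (j p : nat) : vtx := [fset EGamma j p; ELambda j].
Definition F (j : nat) : vtx := [fset ELambda j; EMu].

Definition inQ (P P' : vtx) : Prop :=
  (exists i, 1 <= i <= n /\ P = A i /\ P' = B)
  \/ (exists j p, 1 <= j <= m /\ 1 <= p <= 3 /\ P = D j p /\ P' = B)
  \/ (exists i j j', 1 <= i <= n /\ inDelta i j /\ inDelta i j' /\
        P = S j (posv i) /\ P' = S j' (negv i))
  \/ (exists i j j', 1 <= i <= n /\ inDelta i j /\ inDelta i j' /\ j < j' /\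
        ((P = S j (posv i) /\ P' = K j' (negv i)) \/
         (P = S j (negv i) /\ P' = K j' (posv i))))
  \/ (exists i j j', 1 <= i <= n /\ inDelta i j /\ j < j' <= m /\
        (P = K j (negv i) \/ P = K j (posv i)) /\ P' = F j')
  \/ (exists i' i j, 1 <= i' /\ i' < i /\ i <= n /\ inDelta i j /\
        (P = H (posv i') \/ P = H (negv i')) /\
        (P' = S j (posv i) \/ P' = S j (negv i)))
  \/ (exists i j, 1 <= i <= n /\ 1 <= j <= m /\
        (P = H (negv i) \/ P = H (posv i)) /\ P' = F j)
  \/ (exists j, 1 <= j <= m /\
        let: (X, Y, Z) := clause_of j in
        ((P = K j (negl X) /\ P' = K j X) \/ (P = K j (negl Y) /\ P' = K j Y) \/
         (P = K j (negl Z) /\ P' = K j Z) \/ (P = K j (negl X) /\ P' = L j X) \/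
         (P = K j (negl Y) /\ P' = L j Y) \/ (P = K j (negl Z) /\ P' = L j Z) \/
         (P = S j Y /\ P' = K j X) \/ (P = S j Z /\ P' = K j Y) \/
         (P = S j X /\ P' = K j Z) \/ (P = S j Z /\ P' = L j X) \/
         (P = S j X /\ P' = L j Y) \/ (P = S j Y /\ P' = L j Z))).

Definition QV (P : vtx) : Prop := exists P', inQ P P' \/ inQ P' P.

Definition int_star (P P' : vtx) : Prop :=
  QV P /\ QV P' /\ P != P' /\ P `&` P' != fset0.

Definition forb (P P' : vtx) : Prop := inQ P P' \/ inQ P' P.

End Construction.

Definition simple_graph_on (T : Type) (V : T -> Prop) (G : T -> T -> Prop) : Prop :=
  (forall x y, G x y -> G y x) /\ (forall x, ~ G x x) /\
  (forall x y, G x y -> V x /\ V y).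

Definition chordal (T : eqType) (V : T -> Prop) (G : T -> T -> Prop) : Prop :=
  forall (s : seq T) (x0 : T), 4 <= size s -> uniq s -> (forall x, x \in s -> V x) ->
    (forall k, k < size s -> G (nth x0 s k) (nth x0 s (k.+1 %% size s))) ->
    exists k l, [/\ k < size s, l < size s, k != l,
                 (l != k.+1 %% size s) && (k != l.+1 %% size s) &
                 G (nth x0 s k) (nth x0 s l)].

Definition chordal_sandwich (T : eqType) (V : T -> Prop) (G1 G2 G : T -> T -> Prop) : Prop :=
  [/\ simple_graph_on V G, chordal V G,
      (forall x y, G1 x y -> G x y) & (forall x y, G2 x y -> ~ G x y)].

(* Main.v *)
(* Proof of lemma7 via an abstract chordality derivation on a
   27-vertex local gadget graph (machine-generated cycle/chord case analysis). *)
Require Import Defs.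
From mathcomp Require Import all_boot finmap.
From Stdlib Require Import Classical.
Set Implicit Arguments. Unset Strict Implicit. Unset Printing Implicit Defensive.


Definition prt : seq (nat*nat) := [:: (0,1); (6,7); (6,1); (7,1); (8,1); (9,1); (10,1); (11,1); (2,0); (3,2); (4,2); (5,2); (6,12); (7,13); (8,14); (9,15); (10,16); (11,17); (13,2); (12,3); (15,2); (14,4); (17,2); (16,5); (13,4); (15,5); (17,3)].
Definition flist : seq (nat*nat) := [:: (1,0); (12,13); (14,15); (16,17); (2,8); (3,8); (4,8); (5,8); (6,8); (7,8); (9,0); (10,0); (11,0); (19,18); (21,20); (23,22); (19,24); (21,25); (23,26); (14,18); (16,20); (12,22); (16,24); (12,25); (14,26)].
Definition pr (a : nat) : nat * nat := nth (0,0) prt a.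
Definition shares (a b : nat) : bool :=
  [|| (pr a).1 == (pr b).1, (pr a).1 == (pr b).2, (pr a).2 == (pr b).1 | (pr a).2 == (pr b).2].
Definition forbb (a b : nat) : bool := ((a,b) \in flist) || ((b,a) \in flist).

Definition samep (p q : nat * nat) : bool :=
  [&& (p.1 == q.1) || (p.1 == q.2), (p.2 == q.1) || (p.2 == q.2),
      (q.1 == p.1) || (q.1 == p.2) & (q.2 == p.1) || (q.2 == p.2)].
Lemma pr_inj a b : a < 27 -> b < 27 -> samep (pr a) (pr b) -> a = b.
Proof.
have H : all (fun a => all (fun b => (a == b) || ~~ samep (pr a) (pr b)) (iota 0 27)) (iota 0 27) by [].
move=> ha hb hs.
have Ha : a \in iota 0 27 by rewrite mem_iota.
have Hb : b \in iota 0 27 by rewrite mem_iota.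
have := allP (allP H a Ha) b Hb.
by rewrite hs orbF => /eqP.
Qed.
Lemma pr_lt a : a < 27 -> (pr a).1 < 18 /\ (pr a).2 < 18.
Proof. by do 27 (case: a => [|a] //). Qed.
Definition partner (a : nat) : nat :=
  nth 0 [:: 1; 0; 8; 8; 8; 8; 8; 8; 2; 0; 0; 0; 13; 12; 15; 14; 17; 16; 19; 18; 21; 20; 23; 22; 19; 21; 23] a.
Lemma partner_ok a : a < 27 -> forbb a (partner a).
Proof. by do 27 (case: a => [|a] //). Qed.
Lemma flist_size : size flist = 25. Proof. by []. Qed.

Section Abs.
Variable g : nat -> nat -> Prop.
Hypothesis gs : forall a b, g a b -> g b a.
Hypothesis ch : forall s : seq nat, 4 <= size s -> uniq s -> all (fun x => x < 27) s ->
  (forall k, k < size s -> g (nth 0 s k) (nth 0 s (k.+1 %% size s))) ->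
  exists k l, [/\ k < size s, l < size s, k != l,
                 (l != k.+1 %% size s) && (k != l.+1 %% size s) &
                 g (nth 0 s k) (nth 0 s l)].
Hypothesis ge : forall a b, a < 27 -> b < 27 -> a != b -> shares a b -> g a b.
Hypothesis gn : forall a b, forbb a b -> ~ g a b.

Lemma c4 a b c d : uniq [:: a; b; c; d] -> all (fun x => x < 27) [:: a; b; c; d] ->
  g a b -> g b c -> g c d -> g d a -> g a c \/ g b d.
Proof.
move=> U A e0 e1 e2 e3.
have E : forall k, k < size [:: a; b; c; d] -> g (nth 0 [:: a; b; c; d] k) (nth 0 [:: a; b; c; d] (k.+1 %% size [:: a; b; c; d])).
  by case=> [|[|[|[|[|[|?]]]]]] //= _.
have [kk [l [hk hl hkl hadj G]]] := ch (s:=[:: a; b; c; d]) isT U A E.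
move: hk hl hkl hadj G.
by do 4?[case: kk => [|kk] //]; do 4?[case: l => [|l] //]; move=> /= *; auto 20.
Qed.

Lemma c5 a b c d e : uniq [:: a; b; c; d; e] -> all (fun x => x < 27) [:: a; b; c; d; e] ->
  g a b -> g b c -> g c d -> g d e -> g e a -> g a c \/ g a d \/ g b d \/ g b e \/ g c e.
Proof.
move=> U A e0 e1 e2 e3 e4.
have E : forall k, k < size [:: a; b; c; d; e] -> g (nth 0 [:: a; b; c; d; e] k) (nth 0 [:: a; b; c; d; e] (k.+1 %% size [:: a; b; c; d; e])).
  by case=> [|[|[|[|[|[|?]]]]]] //= _.
have [kk [l [hk hl hkl hadj G]]] := ch (s:=[:: a; b; c; d; e]) isT U A E.
move: hk hl hkl hadj G.
by do 5?[case: kk => [|kk] //]; do 5?[case: l => [|l] //]; move=> /= *; auto 20.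
Qed.

Lemma c6 a b c d e f : uniq [:: a; b; c; d; e; f] -> all (fun x => x < 27) [:: a; b; c; d; e; f] ->
  g a b -> g b c -> g c d -> g d e -> g e f -> g f a -> g a c \/ g a d \/ g a e \/ g b d \/ g b e \/ g b f \/ g c e \/ g c f \/ g d f.
Proof.
move=> U A e0 e1 e2 e3 e4 e5.
have E : forall k, k < size [:: a; b; c; d; e; f] -> g (nth 0 [:: a; b; c; d; e; f] k) (nth 0 [:: a; b; c; d; e; f] (k.+1 %% size [:: a; b; c; d; e; f])).
  by case=> [|[|[|[|[|[|?]]]]]] //= _.
have [kk [l [hk hl hkl hadj G]]] := ch (s:=[:: a; b; c; d; e; f]) isT U A E.
move: hk hl hkl hadj G.
by do 6?[case: kk => [|kk] //]; do 6?[case: l => [|l] //]; move=> /= *; auto 20.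
Qed.

Lemma cx_SX_B (P_0_18 : g 0 18) : g 12 0.
Proof.
  apply: NNPP => N0; have N_0_12 : ~ g 0 12 by move=> /gs /N0.
  case: (classic (g 1 8)) => [P_1_8|N_1_8].
  {
    have [C|C] := @c4 0 2 1 8 isT isT (@ge 0 2 isT isT isT isT) (@ge 2 1 isT isT isT isT) P_1_8 (@ge 8 0 isT isT isT isT); [ by case: (@gn 0 1 isT C) | by case: (@gn 2 8 isT C) ].
  }
  {
    case: (classic (g 1 9)) => [P_1_9|N_1_9].
    {
      have P_3_9 : g 3 9.
      { have [C|[C|[C|[C|C]]]] := @c5 0 3 1 9 8 isT isT (@ge 0 3 isT isT isT isT) (@ge 3 1 isT isT isT isT) P_1_9 (@ge 9 8 isT isT isT isT) (@ge 8 0 isT isT isT isT); [ by case: (@gn 0 1 isT C) | by case: (@gn 0 9 isT C) | exact: C | by case: (@gn 3 8 isT C) | by case: (N_1_8 C) ]. }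
      have [C|C] := @c4 0 3 9 8 isT isT (@ge 0 3 isT isT isT isT) P_3_9 (@ge 9 8 isT isT isT isT) (@ge 8 0 isT isT isT isT); [ by case: (@gn 0 9 isT C) | by case: (@gn 3 8 isT C) ].
    }
    {
      case: (classic (g 2 9)) => [P_2_9|N_2_9].
      {
        have [C|C] := @c4 0 2 9 8 isT isT (@ge 0 2 isT isT isT isT) P_2_9 (@ge 9 8 isT isT isT isT) (@ge 8 0 isT isT isT isT); [ by case: (@gn 0 9 isT C) | by case: (@gn 2 8 isT C) ].
      }
      {
        case: (classic (g 1 18)) => [P_1_18|N_1_18].
        {
          have N_8_12 : ~ g 8 12.
          { move=> E. have [C|C] := @c4 0 2 12 8 isT isT (@ge 0 2 isT isT isT isT) (@ge 2 12 isT isT isT isT) (gs E) (@ge 8 0 isT isT isT isT); [ by case: (N_0_12 C) | by case: (@gn 2 8 isT C) ]. }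
          have N_9_12 : ~ g 9 12.
          { move=> E. have [C|[C|[C|[C|C]]]] := @c5 0 2 12 9 8 isT isT (@ge 0 2 isT isT isT isT) (@ge 2 12 isT isT isT isT) (gs E) (@ge 9 8 isT isT isT isT) (@ge 8 0 isT isT isT isT); [ by case: (N_0_12 C) | by case: (@gn 0 9 isT C) | by case: (N_2_9 C) | by case: (@gn 2 8 isT C) | by case: (N_8_12 (gs C)) ]. }
          have N_12_18 : ~ g 12 18.
          { move=> E. have [C|C] := @c4 9 18 12 19 isT isT (@ge 9 18 isT isT isT isT) (gs E) (@ge 12 19 isT isT isT isT) (@ge 19 9 isT isT isT isT); [ by case: (N_9_12 C) | by case: (@gn 18 19 isT C) ]. }
          have P_1_19 : g 1 19.
          { have [C|[C|[C|[C|C]]]] := @c5 1 12 19 9 18 isT isT (@ge 1 12 isT isT isT isT) (@ge 12 19 isT isT isT isT) (@ge 19 9 isT isT isT isT) (@ge 9 18 isT isT isT isT) (gs P_1_18); [ exact: C | by case: (N_1_9 C) | by case: (N_9_12 (gs C)) | by case: (N_12_18 C) | by case: (@gn 19 18 isT C) ]. }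
          have [C|C] := @c4 1 18 9 19 isT isT P_1_18 (@ge 18 9 isT isT isT isT) (@ge 9 19 isT isT isT isT) (gs P_1_19); [ by case: (N_1_9 C) | by case: (@gn 18 19 isT C) ].
        }
        {
          case: (classic (g 1 19)) => [P_1_19|N_1_19].
          {
            case: (classic (g 2 18)) => [P_2_18|N_2_18].
            {
              have P_2_19 : g 2 19.
              { have [C|[C|[C|[C|C]]]] := @c5 1 2 18 9 19 isT isT (@ge 1 2 isT isT isT isT) P_2_18 (@ge 18 9 isT isT isT isT) (@ge 9 19 isT isT isT isT) (gs P_1_19); [ by case: (N_1_18 C) | by case: (N_1_9 C) | by case: (N_2_9 C) | exact: C | by case: (@gn 18 19 isT C) ]. }
              have [C|C] := @c4 2 18 9 19 isT isT P_2_18 (@ge 18 9 isT isT isT isT) (@ge 9 19 isT isT isT isT) (gs P_2_19); [ by case: (N_2_9 C) | by case: (@gn 18 19 isT C) ].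
            }
            {
              have N_0_19 : ~ g 0 19.
              { move=> E. have [C|C] := @c4 0 18 9 19 isT isT P_0_18 (@ge 18 9 isT isT isT isT) (@ge 9 19 isT isT isT isT) (gs E); [ by case: (@gn 0 9 isT C) | by case: (@gn 18 19 isT C) ]. }
              have P_2_19 : g 2 19.
              { have [C|[C|[C|[C|[C|[C|[C|[C|C]]]]]]]] := @c6 0 2 1 19 9 18 isT isT (@ge 0 2 isT isT isT isT) (@ge 2 1 isT isT isT isT) P_1_19 (@ge 19 9 isT isT isT isT) (@ge 9 18 isT isT isT isT) (gs P_0_18); [ by case: (@gn 0 1 isT C) | by case: (N_0_19 C) | by case: (@gn 0 9 isT C) | exact: C | by case: (N_2_9 C) | by case: (N_2_18 C) | by case: (N_1_9 C) | by case: (N_1_18 C) | by case: (@gn 19 18 isT C) ]. }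
              have [C|[C|[C|[C|C]]]] := @c5 0 2 19 9 18 isT isT (@ge 0 2 isT isT isT isT) P_2_19 (@ge 19 9 isT isT isT isT) (@ge 9 18 isT isT isT isT) (gs P_0_18); [ by case: (N_0_19 C) | by case: (@gn 0 9 isT C) | by case: (N_2_9 C) | by case: (N_2_18 C) | by case: (@gn 19 18 isT C) ].
            }
          }
          {
            have N_8_12 : ~ g 8 12.
            { move=> E. have [C|C] := @c4 0 2 12 8 isT isT (@ge 0 2 isT isT isT isT) (@ge 2 12 isT isT isT isT) (gs E) (@ge 8 0 isT isT isT isT); [ by case: (N_0_12 C) | by case: (@gn 2 8 isT C) ]. }
            have N_9_12 : ~ g 9 12.
            { move=> E. have [C|[C|[C|[C|C]]]] := @c5 0 2 12 9 8 isT isT (@ge 0 2 isT isT isT isT) (@ge 2 12 isT isT isT isT) (gs E) (@ge 9 8 isT isT isT isT) (@ge 8 0 isT isT isT isT); [ by case: (N_0_12 C) | by case: (@gn 0 9 isT C) | by case: (N_2_9 C) | by case: (@gn 2 8 isT C) | by case: (N_8_12 (gs C)) ]. }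
            have N_12_18 : ~ g 12 18.
            { move=> E. have [C|C] := @c4 9 18 12 19 isT isT (@ge 9 18 isT isT isT isT) (gs E) (@ge 12 19 isT isT isT isT) (@ge 19 9 isT isT isT isT); [ by case: (N_9_12 C) | by case: (@gn 18 19 isT C) ]. }
            have N_13_19 : ~ g 13 19.
            { move=> E. have [C|C] := @c4 1 12 19 13 isT isT (@ge 1 12 isT isT isT isT) (@ge 12 19 isT isT isT isT) (gs E) (@ge 13 1 isT isT isT isT); [ by case: (N_1_19 C) | by case: (@gn 12 13 isT C) ]. }
            have N_9_13 : ~ g 9 13.
            { move=> E. have [C|[C|[C|[C|C]]]] := @c5 1 12 19 9 13 isT isT (@ge 1 12 isT isT isT isT) (@ge 12 19 isT isT isT isT) (@ge 19 9 isT isT isT isT) E (@ge 13 1 isT isT isT isT); [ by case: (N_1_19 C) | by case: (N_1_9 C) | by case: (N_9_12 (gs C)) | by case: (@gn 12 13 isT C) | by case: (N_13_19 (gs C)) ]. }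
            have [C|[C|[C|[C|[C|[C|[C|[C|C]]]]]]]] := @c6 1 12 19 9 18 13 isT isT (@ge 1 12 isT isT isT isT) (@ge 12 19 isT isT isT isT) (@ge 19 9 isT isT isT isT) (@ge 9 18 isT isT isT isT) (@ge 18 13 isT isT isT isT) (@ge 13 1 isT isT isT isT); [ by case: (N_1_19 C) | by case: (N_1_9 C) | by case: (N_1_18 C) | by case: (N_9_12 (gs C)) | by case: (N_12_18 C) | by case: (@gn 12 13 isT C) | by case: (@gn 19 18 isT C) | by case: (N_13_19 (gs C)) | by case: (N_9_13 C) ].
          }
        }
      }
    }
  }
Qed.

Lemma cx_SX_HnX (P_0_18 : g 0 18) (P_0_12 : g 0 12) : g 12 3.
Proof.
  apply: NNPP => N0; have N_3_12 : ~ g 3 12 by move=> /gs /N0.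
  have [C|C] := @c4 0 3 1 12 isT isT (@ge 0 3 isT isT isT isT) (@ge 3 1 isT isT isT isT) (@ge 1 12 isT isT isT isT) (gs P_0_12); [ by case: (@gn 0 1 isT C) | by case: (N_3_12 C) ].
Qed.

Lemma cx_SX_F (P_0_18 : g 0 18) (P_0_12 : g 0 12) (P_3_12 : g 3 12) : g 12 8.
Proof.
  apply: NNPP => N0; have N_8_12 : ~ g 8 12 by move=> /gs /N0.
  have N_9_12 : ~ g 9 12.
  { move=> E. have [C|C] := @c4 0 8 9 12 isT isT (@ge 0 8 isT isT isT isT) (@ge 8 9 isT isT isT isT) E (gs P_0_12); [ by case: (@gn 0 9 isT C) | by case: (N_8_12 C) ]. }
  have N_12_18 : ~ g 12 18.
  { move=> E. have [C|C] := @c4 9 18 12 19 isT isT (@ge 9 18 isT isT isT isT) (gs E) (@ge 12 19 isT isT isT isT) (@ge 19 9 isT isT isT isT); [ by case: (N_9_12 C) | by case: (@gn 18 19 isT C) ]. }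
  have P_0_19 : g 0 19.
  { have [C|[C|[C|[C|C]]]] := @c5 0 12 19 9 18 isT isT P_0_12 (@ge 12 19 isT isT isT isT) (@ge 19 9 isT isT isT isT) (@ge 9 18 isT isT isT isT) (gs P_0_18); [ exact: C | by case: (@gn 0 9 isT C) | by case: (N_9_12 (gs C)) | by case: (N_12_18 C) | by case: (@gn 19 18 isT C) ]. }
  have [C|C] := @c4 0 18 9 19 isT isT P_0_18 (@ge 18 9 isT isT isT isT) (@ge 9 19 isT isT isT isT) (gs P_0_19); [ by case: (@gn 0 9 isT C) | by case: (@gn 18 19 isT C) ].
Qed.

Lemma cx_KX_A (P_0_18 : g 0 18) (P_0_12 : g 0 12) (P_3_12 : g 3 12) (P_8_12 : g 8 12) : g 18 1.
Proof.
  apply: NNPP => N0; have N_1_18 : ~ g 1 18 by move=> /gs /N0.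
  have N_12_18 : ~ g 12 18.
  { move=> E. have [C|C] := @c4 1 12 18 13 isT isT (@ge 1 12 isT isT isT isT) E (@ge 18 13 isT isT isT isT) (@ge 13 1 isT isT isT isT); [ by case: (N_1_18 C) | by case: (@gn 12 13 isT C) ]. }
  have N_3_18 : ~ g 3 18.
  { move=> E. have [C|C] := @c4 3 12 8 18 isT isT P_3_12 (gs P_8_12) (@ge 8 18 isT isT isT isT) (gs E); [ by case: (@gn 3 8 isT C) | by case: (N_12_18 C) ]. }
  have P_8_13 : g 8 13.
  { have [C|[C|[C|[C|C]]]] := @c5 3 12 8 18 13 isT isT P_3_12 (gs P_8_12) (@ge 8 18 isT isT isT isT) (@ge 18 13 isT isT isT isT) (@ge 13 3 isT isT isT isT); [ by case: (@gn 3 8 isT C) | by case: (N_3_18 C) | by case: (N_12_18 C) | by case: (@gn 12 13 isT C) | exact: C ]. }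
  have [C|C] := @c4 3 12 8 13 isT isT P_3_12 (gs P_8_12) P_8_13 (@ge 13 3 isT isT isT isT); [ by case: (@gn 3 8 isT C) | by case: (@gn 12 13 isT C) ].
Qed.

Lemma cx_KX_HX (P_0_18 : g 0 18) (P_0_12 : g 0 12) (P_3_12 : g 3 12) (P_8_12 : g 8 12) (P_1_18 : g 1 18) : g 18 2.
Proof.
  apply: NNPP => N0; have N_2_18 : ~ g 2 18 by move=> /gs /N0.
  have [C|C] := @c4 0 2 1 18 isT isT (@ge 0 2 isT isT isT isT) (@ge 2 1 isT isT isT isT) P_1_18 (gs P_0_18); [ by case: (@gn 0 1 isT C) | by case: (N_2_18 C) ].
Qed.

Lemma cx_KX_HnX (P_0_18 : g 0 18) (P_0_12 : g 0 12) (P_3_12 : g 3 12) (P_8_12 : g 8 12) (P_1_18 : g 1 18) (P_2_18 : g 2 18) : g 18 3.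
Proof.
  apply: NNPP => N0; have N_3_18 : ~ g 3 18 by move=> /gs /N0.
  have [C|C] := @c4 0 3 1 18 isT isT (@ge 0 3 isT isT isT isT) (@ge 3 1 isT isT isT isT) P_1_18 (gs P_0_18); [ by case: (@gn 0 1 isT C) | by case: (N_3_18 C) ].
Qed.

Lemma cx_LX_B (P_0_18 : g 0 18) (P_0_12 : g 0 12) (P_3_12 : g 3 12) (P_8_12 : g 8 12) (P_1_18 : g 1 18) (P_2_18 : g 2 18) (P_3_18 : g 3 18) : g 24 0.
Proof.
  apply: NNPP => N0; have N_0_24 : ~ g 0 24 by move=> /gs /N0.
  case: (classic (g 1 8)) => [P_1_8|N_1_8].
  {
    have [C|C] := @c4 0 2 1 8 isT isT (@ge 0 2 isT isT isT isT) (@ge 2 1 isT isT isT isT) P_1_8 (@ge 8 0 isT isT isT isT); [ by case: (@gn 0 1 isT C) | by case: (@gn 2 8 isT C) ].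
  }
  {
    case: (classic (g 1 10)) => [P_1_10|N_1_10].
    {
      have P_3_10 : g 3 10.
      { have [C|[C|[C|[C|C]]]] := @c5 0 3 1 10 8 isT isT (@ge 0 3 isT isT isT isT) (@ge 3 1 isT isT isT isT) P_1_10 (@ge 10 8 isT isT isT isT) (@ge 8 0 isT isT isT isT); [ by case: (@gn 0 1 isT C) | by case: (@gn 0 10 isT C) | exact: C | by case: (@gn 3 8 isT C) | by case: (N_1_8 C) ]. }
      have [C|C] := @c4 0 3 10 8 isT isT (@ge 0 3 isT isT isT isT) P_3_10 (@ge 10 8 isT isT isT isT) (@ge 8 0 isT isT isT isT); [ by case: (@gn 0 10 isT C) | by case: (@gn 3 8 isT C) ].
    }
    {
      case: (classic (g 2 10)) => [P_2_10|N_2_10].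
      {
        have [C|C] := @c4 0 2 10 8 isT isT (@ge 0 2 isT isT isT isT) P_2_10 (@ge 10 8 isT isT isT isT) (@ge 8 0 isT isT isT isT); [ by case: (@gn 0 10 isT C) | by case: (@gn 2 8 isT C) ].
      }
      {
        case: (classic (g 2 24)) => [P_2_24|N_2_24].
        {
          have N_8_24 : ~ g 8 24.
          { move=> E. have [C|C] := @c4 0 2 24 8 isT isT (@ge 0 2 isT isT isT isT) P_2_24 (gs E) (@ge 8 0 isT isT isT isT); [ by case: (N_0_24 C) | by case: (@gn 2 8 isT C) ]. }
          have [C|[C|[C|[C|C]]]] := @c5 0 2 24 10 8 isT isT (@ge 0 2 isT isT isT isT) P_2_24 (@ge 24 10 isT isT isT isT) (@ge 10 8 isT isT isT isT) (@ge 8 0 isT isT isT isT); [ by case: (N_0_24 C) | by case: (@gn 0 10 isT C) | by case: (N_2_10 C) | by case: (@gn 2 8 isT C) | by case: (N_8_24 (gs C)) ].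
        }
        {
          case: (classic (g 1 24)) => [P_1_24|N_1_24].
          {
            have N_8_24 : ~ g 8 24.
            { move=> E. have [C|[C|[C|[C|C]]]] := @c5 0 2 1 24 8 isT isT (@ge 0 2 isT isT isT isT) (@ge 2 1 isT isT isT isT) P_1_24 (gs E) (@ge 8 0 isT isT isT isT); [ by case: (@gn 0 1 isT C) | by case: (N_0_24 C) | by case: (N_2_24 C) | by case: (@gn 2 8 isT C) | by case: (N_1_8 C) ]. }
            have [C|[C|[C|[C|[C|[C|[C|[C|C]]]]]]]] := @c6 0 2 1 24 10 8 isT isT (@ge 0 2 isT isT isT isT) (@ge 2 1 isT isT isT isT) P_1_24 (@ge 24 10 isT isT isT isT) (@ge 10 8 isT isT isT isT) (@ge 8 0 isT isT isT isT); [ by case: (@gn 0 1 isT C) | by case: (N_0_24 C) | by case: (@gn 0 10 isT C) | by case: (N_2_24 C) | by case: (N_2_10 C) | by case: (@gn 2 8 isT C) | by case: (N_1_10 C) | by case: (N_1_8 C) | by case: (N_8_24 (gs C)) ].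
          }
          {
            case: (classic (g 2 13)) => [P_2_13|N_2_13].
            {
              have N_8_13 : ~ g 8 13.
              { move=> E. have [C|C] := @c4 3 12 8 13 isT isT P_3_12 (gs P_8_12) E (@ge 13 3 isT isT isT isT); [ by case: (@gn 3 8 isT C) | by case: (@gn 12 13 isT C) ]. }
              have N_0_13 : ~ g 0 13.
              { move=> E. have [C|C] := @c4 0 12 1 13 isT isT P_0_12 (@ge 12 1 isT isT isT isT) (@ge 1 13 isT isT isT isT) (gs E); [ by case: (@gn 0 1 isT C) | by case: (@gn 12 13 isT C) ]. }
              have N_12_24 : ~ g 12 24.
              { move=> E. have [C|C] := @c4 1 12 24 13 isT isT (@ge 1 12 isT isT isT isT) E (@ge 24 13 isT isT isT isT) (@ge 13 1 isT isT isT isT); [ by case: (N_1_24 C) | by case: (@gn 12 13 isT C) ]. }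
              have N_8_24 : ~ g 8 24.
              { move=> E. have [C|[C|[C|[C|C]]]] := @c5 1 12 8 24 13 isT isT (@ge 1 12 isT isT isT isT) (gs P_8_12) E (@ge 24 13 isT isT isT isT) (@ge 13 1 isT isT isT isT); [ by case: (N_1_8 C) | by case: (N_1_24 C) | by case: (N_12_24 C) | by case: (@gn 12 13 isT C) | by case: (N_8_13 C) ]. }
              have N_10_13 : ~ g 10 13.
              { move=> E. have [C|[C|[C|[C|C]]]] := @c5 0 2 13 10 8 isT isT (@ge 0 2 isT isT isT isT) P_2_13 (gs E) (@ge 10 8 isT isT isT isT) (@ge 8 0 isT isT isT isT); [ by case: (N_0_13 C) | by case: (@gn 0 10 isT C) | by case: (N_2_10 C) | by case: (@gn 2 8 isT C) | by case: (N_8_13 (gs C)) ]. }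
              have [C|[C|[C|[C|[C|[C|[C|[C|C]]]]]]]] := @c6 0 2 13 24 10 8 isT isT (@ge 0 2 isT isT isT isT) P_2_13 (@ge 13 24 isT isT isT isT) (@ge 24 10 isT isT isT isT) (@ge 10 8 isT isT isT isT) (@ge 8 0 isT isT isT isT); [ by case: (N_0_13 C) | by case: (N_0_24 C) | by case: (@gn 0 10 isT C) | by case: (N_2_24 C) | by case: (N_2_10 C) | by case: (@gn 2 8 isT C) | by case: (N_10_13 (gs C)) | by case: (N_8_13 (gs C)) | by case: (N_8_24 (gs C)) ].
            }
            {
              have N_8_13 : ~ g 8 13.
              { move=> E. have [C|C] := @c4 3 12 8 13 isT isT P_3_12 (gs P_8_12) E (@ge 13 3 isT isT isT isT); [ by case: (@gn 3 8 isT C) | by case: (@gn 12 13 isT C) ]. }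
              have N_0_13 : ~ g 0 13.
              { move=> E. have [C|C] := @c4 0 12 1 13 isT isT P_0_12 (@ge 12 1 isT isT isT isT) (@ge 1 13 isT isT isT isT) (gs E); [ by case: (@gn 0 1 isT C) | by case: (@gn 12 13 isT C) ]. }
              have N_12_24 : ~ g 12 24.
              { move=> E. have [C|C] := @c4 1 12 24 13 isT isT (@ge 1 12 isT isT isT isT) E (@ge 24 13 isT isT isT isT) (@ge 13 1 isT isT isT isT); [ by case: (N_1_24 C) | by case: (@gn 12 13 isT C) ]. }
              have N_8_24 : ~ g 8 24.
              { move=> E. have [C|[C|[C|[C|C]]]] := @c5 1 12 8 24 13 isT isT (@ge 1 12 isT isT isT isT) (gs P_8_12) E (@ge 24 13 isT isT isT isT) (@ge 13 1 isT isT isT isT); [ by case: (N_1_8 C) | by case: (N_1_24 C) | by case: (N_12_24 C) | by case: (@gn 12 13 isT C) | by case: (N_8_13 C) ]. }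
              have N_10_13 : ~ g 10 13.
              { move=> E. have [C|[C|[C|[C|[C|[C|[C|[C|C]]]]]]]] := @c6 0 2 1 13 10 8 isT isT (@ge 0 2 isT isT isT isT) (@ge 2 1 isT isT isT isT) (@ge 1 13 isT isT isT isT) (gs E) (@ge 10 8 isT isT isT isT) (@ge 8 0 isT isT isT isT); [ by case: (@gn 0 1 isT C) | by case: (N_0_13 C) | by case: (@gn 0 10 isT C) | by case: (N_2_13 C) | by case: (N_2_10 C) | by case: (@gn 2 8 isT C) | by case: (N_1_10 C) | by case: (N_1_8 C) | by case: (N_8_13 (gs C)) ]. }
              have P_10_12 : g 10 12.
              { have [C|[C|[C|[C|[C|[C|[C|[C|C]]]]]]]] := @c6 1 12 8 10 24 13 isT isT (@ge 1 12 isT isT isT isT) (gs P_8_12) (@ge 8 10 isT isT isT isT) (@ge 10 24 isT isT isT isT) (@ge 24 13 isT isT isT isT) (@ge 13 1 isT isT isT isT); [ by case: (N_1_8 C) | by case: (N_1_10 C) | by case: (N_1_24 C) | exact: (gs C) | by case: (N_12_24 C) | by case: (@gn 12 13 isT C) | by case: (N_8_24 C) | by case: (N_8_13 C) | by case: (N_10_13 C) ]. }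
              have [C|[C|[C|[C|C]]]] := @c5 1 12 10 24 13 isT isT (@ge 1 12 isT isT isT isT) (gs P_10_12) (@ge 10 24 isT isT isT isT) (@ge 24 13 isT isT isT isT) (@ge 13 1 isT isT isT isT); [ by case: (N_1_10 C) | by case: (N_1_24 C) | by case: (N_12_24 C) | by case: (@gn 12 13 isT C) | by case: (N_10_13 C) ].
            }
          }
        }
      }
    }
  }
Qed.

Lemma cx_LX_F (P_0_18 : g 0 18) (P_0_12 : g 0 12) (P_3_12 : g 3 12) (P_8_12 : g 8 12) (P_1_18 : g 1 18) (P_2_18 : g 2 18) (P_3_18 : g 3 18) (P_0_24 : g 0 24) : g 24 8.
Proof.
  apply: NNPP => N0; have N_8_24 : ~ g 8 24 by move=> /gs /N0.
  have [C|C] := @c4 0 8 10 24 isT isT (@ge 0 8 isT isT isT isT) (@ge 8 10 isT isT isT isT) (@ge 10 24 isT isT isT isT) (gs P_0_24); [ by case: (@gn 0 10 isT C) | by case: (N_8_24 C) ].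
Qed.

Lemma cx_LX_A (P_0_18 : g 0 18) (P_0_12 : g 0 12) (P_3_12 : g 3 12) (P_8_12 : g 8 12) (P_1_18 : g 1 18) (P_2_18 : g 2 18) (P_3_18 : g 3 18) (P_0_24 : g 0 24) (P_8_24 : g 8 24) : g 24 1.
Proof.
  apply: NNPP => N0; have N_1_24 : ~ g 1 24 by move=> /gs /N0.
  have N_12_24 : ~ g 12 24.
  { move=> E. have [C|C] := @c4 1 12 24 13 isT isT (@ge 1 12 isT isT isT isT) E (@ge 24 13 isT isT isT isT) (@ge 13 1 isT isT isT isT); [ by case: (N_1_24 C) | by case: (@gn 12 13 isT C) ]. }
  have N_3_24 : ~ g 3 24.
  { move=> E. have [C|C] := @c4 3 12 8 24 isT isT P_3_12 (gs P_8_12) P_8_24 (gs E); [ by case: (@gn 3 8 isT C) | by case: (N_12_24 C) ]. }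
  have P_8_13 : g 8 13.
  { have [C|[C|[C|[C|C]]]] := @c5 3 12 8 24 13 isT isT P_3_12 (gs P_8_12) P_8_24 (@ge 24 13 isT isT isT isT) (@ge 13 3 isT isT isT isT); [ by case: (@gn 3 8 isT C) | by case: (N_3_24 C) | by case: (N_12_24 C) | by case: (@gn 12 13 isT C) | exact: C ]. }
  have [C|C] := @c4 3 12 8 13 isT isT P_3_12 (gs P_8_12) P_8_13 (@ge 13 3 isT isT isT isT); [ by case: (@gn 3 8 isT C) | by case: (@gn 12 13 isT C) ].
Qed.

Lemma cx_LX_HX (P_0_18 : g 0 18) (P_0_12 : g 0 12) (P_3_12 : g 3 12) (P_8_12 : g 8 12) (P_1_18 : g 1 18) (P_2_18 : g 2 18) (P_3_18 : g 3 18) (P_0_24 : g 0 24) (P_8_24 : g 8 24) (P_1_24 : g 1 24) : g 24 2.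
Proof.
  apply: NNPP => N0; have N_2_24 : ~ g 2 24 by move=> /gs /N0.
  have [C|C] := @c4 0 2 1 24 isT isT (@ge 0 2 isT isT isT isT) (@ge 2 1 isT isT isT isT) P_1_24 (gs P_0_24); [ by case: (@gn 0 1 isT C) | by case: (N_2_24 C) ].
Qed.

Lemma cx_LX_HnX (P_0_18 : g 0 18) (P_0_12 : g 0 12) (P_3_12 : g 3 12) (P_8_12 : g 8 12) (P_1_18 : g 1 18) (P_2_18 : g 2 18) (P_3_18 : g 3 18) (P_0_24 : g 0 24) (P_8_24 : g 8 24) (P_1_24 : g 1 24) (P_2_24 : g 2 24) : g 24 3.
Proof.
  apply: NNPP => N0; have N_3_24 : ~ g 3 24 by move=> /gs /N0.
  have [C|C] := @c4 0 3 1 24 isT isT (@ge 0 3 isT isT isT isT) (@ge 3 1 isT isT isT isT) P_1_24 (gs P_0_24); [ by case: (@gn 0 1 isT C) | by case: (N_3_24 C) ].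
Qed.

Lemma cn_KnX_F (P_0_19 : g 0 19) : g 19 8.
Proof.
  apply: NNPP => N0; have N_8_19 : ~ g 8 19 by move=> /gs /N0.
  have [C|C] := @c4 0 8 9 19 isT isT (@ge 0 8 isT isT isT isT) (@ge 8 9 isT isT isT isT) (@ge 9 19 isT isT isT isT) (gs P_0_19); [ by case: (@gn 0 9 isT C) | by case: (N_8_19 C) ].
Qed.

Lemma cn_SnX_B (P_0_19 : g 0 19) (P_8_19 : g 8 19) : g 13 0.
Proof.
  apply: NNPP => N0; have N_0_13 : ~ g 0 13 by move=> /gs /N0.
  have N_8_13 : ~ g 8 13.
  { move=> E. have [C|C] := @c4 0 3 13 8 isT isT (@ge 0 3 isT isT isT isT) (@ge 3 13 isT isT isT isT) (gs E) (@ge 8 0 isT isT isT isT); [ by case: (N_0_13 C) | by case: (@gn 3 8 isT C) ]. }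
  have N_0_18 : ~ g 0 18.
  { move=> E. have [C|C] := @c4 0 18 9 19 isT isT E (@ge 18 9 isT isT isT isT) (@ge 9 19 isT isT isT isT) (gs P_0_19); [ by case: (@gn 0 9 isT C) | by case: (@gn 18 19 isT C) ]. }
  have P_3_18 : g 3 18.
  { have [C|[C|[C|[C|C]]]] := @c5 0 3 13 18 8 isT isT (@ge 0 3 isT isT isT isT) (@ge 3 13 isT isT isT isT) (@ge 13 18 isT isT isT isT) (@ge 18 8 isT isT isT isT) (@ge 8 0 isT isT isT isT); [ by case: (N_0_13 C) | by case: (N_0_18 C) | exact: C | by case: (@gn 3 8 isT C) | by case: (N_8_13 (gs C)) ]. }
  have [C|C] := @c4 0 3 18 8 isT isT (@ge 0 3 isT isT isT isT) P_3_18 (@ge 18 8 isT isT isT isT) (@ge 8 0 isT isT isT isT); [ by case: (N_0_18 C) | by case: (@gn 3 8 isT C) ].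
Qed.

Lemma cn_SnX_HX (P_0_19 : g 0 19) (P_8_19 : g 8 19) (P_0_13 : g 0 13) : g 13 2.
Proof.
  apply: NNPP => N0; have N_2_13 : ~ g 2 13 by move=> /gs /N0.
  have [C|C] := @c4 0 2 1 13 isT isT (@ge 0 2 isT isT isT isT) (@ge 2 1 isT isT isT isT) (@ge 1 13 isT isT isT isT) (gs P_0_13); [ by case: (@gn 0 1 isT C) | by case: (N_2_13 C) ].
Qed.

Lemma cn_SnX_F (P_0_19 : g 0 19) (P_8_19 : g 8 19) (P_0_13 : g 0 13) (P_2_13 : g 2 13) : g 13 8.
Proof.
  apply: NNPP => N0; have N_8_13 : ~ g 8 13 by move=> /gs /N0.
  have N_13_19 : ~ g 13 19.
  { move=> E. have [C|C] := @c4 8 18 13 19 isT isT (@ge 8 18 isT isT isT isT) (@ge 18 13 isT isT isT isT) E (gs P_8_19); [ by case: (N_8_13 C) | by case: (@gn 18 19 isT C) ]. }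
  have N_1_19 : ~ g 1 19.
  { move=> E. have [C|C] := @c4 0 13 1 19 isT isT P_0_13 (@ge 13 1 isT isT isT isT) E (gs P_0_19); [ by case: (@gn 0 1 isT C) | by case: (N_13_19 C) ]. }
  have P_0_12 : g 0 12.
  { have [C|[C|[C|[C|C]]]] := @c5 0 13 1 12 19 isT isT P_0_13 (@ge 13 1 isT isT isT isT) (@ge 1 12 isT isT isT isT) (@ge 12 19 isT isT isT isT) (gs P_0_19); [ by case: (@gn 0 1 isT C) | exact: C | by case: (@gn 13 12 isT C) | by case: (N_13_19 C) | by case: (N_1_19 C) ]. }
  have [C|C] := @c4 0 12 1 13 isT isT P_0_12 (@ge 12 1 isT isT isT isT) (@ge 1 13 isT isT isT isT) (gs P_0_13); [ by case: (@gn 0 1 isT C) | by case: (@gn 12 13 isT C) ].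
Qed.

Lemma cn_KnX_A (P_0_19 : g 0 19) (P_8_19 : g 8 19) (P_0_13 : g 0 13) (P_2_13 : g 2 13) (P_8_13 : g 8 13) : g 19 1.
Proof.
  apply: NNPP => N0; have N_1_19 : ~ g 1 19 by move=> /gs /N0.
  have N_13_19 : ~ g 13 19.
  { move=> E. have [C|C] := @c4 1 12 19 13 isT isT (@ge 1 12 isT isT isT isT) (@ge 12 19 isT isT isT isT) (gs E) (@ge 13 1 isT isT isT isT); [ by case: (N_1_19 C) | by case: (@gn 12 13 isT C) ]. }
  have N_2_19 : ~ g 2 19.
  { move=> E. have [C|C] := @c4 2 13 8 19 isT isT P_2_13 (gs P_8_13) P_8_19 (gs E); [ by case: (@gn 2 8 isT C) | by case: (N_13_19 C) ]. }
  have P_8_12 : g 8 12.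
  { have [C|[C|[C|[C|C]]]] := @c5 2 12 19 8 13 isT isT (@ge 2 12 isT isT isT isT) (@ge 12 19 isT isT isT isT) (gs P_8_19) P_8_13 (gs P_2_13); [ by case: (N_2_19 C) | by case: (@gn 2 8 isT C) | exact: (gs C) | by case: (@gn 12 13 isT C) | by case: (N_13_19 (gs C)) ]. }
  have [C|C] := @c4 2 12 8 13 isT isT (@ge 2 12 isT isT isT isT) (gs P_8_12) P_8_13 (gs P_2_13); [ by case: (@gn 2 8 isT C) | by case: (@gn 12 13 isT C) ].
Qed.

Lemma cn_KnX_HnX (P_0_19 : g 0 19) (P_8_19 : g 8 19) (P_0_13 : g 0 13) (P_2_13 : g 2 13) (P_8_13 : g 8 13) (P_1_19 : g 1 19) : g 19 3.
Proof.
  apply: NNPP => N0; have N_3_19 : ~ g 3 19 by move=> /gs /N0.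
  have [C|C] := @c4 0 3 1 19 isT isT (@ge 0 3 isT isT isT isT) (@ge 3 1 isT isT isT isT) P_1_19 (gs P_0_19); [ by case: (@gn 0 1 isT C) | by case: (N_3_19 C) ].
Qed.

Lemma cn_KnX_HX (P_0_19 : g 0 19) (P_8_19 : g 8 19) (P_0_13 : g 0 13) (P_2_13 : g 2 13) (P_8_13 : g 8 13) (P_1_19 : g 1 19) (P_3_19 : g 3 19) : g 19 2.
Proof.
  apply: NNPP => N0; have N_2_19 : ~ g 2 19 by move=> /gs /N0.
  have [C|C] := @c4 0 2 1 19 isT isT (@ge 0 2 isT isT isT isT) (@ge 2 1 isT isT isT isT) P_1_19 (gs P_0_19); [ by case: (@gn 0 1 isT C) | by case: (N_2_19 C) ].
Qed.

Lemma ca_KnX_B (N_0_18 : ~ g 0 18) : g 19 0.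
Proof.
  apply: NNPP => N0; have N_0_19 : ~ g 0 19 by move=> /gs /N0.
  case: (classic (g 0 12)) => [P_0_12|N_0_12].
  {
    have N_3_18 : ~ g 3 18.
    { move=> E. have [C|C] := @c4 0 3 18 8 isT isT (@ge 0 3 isT isT isT isT) E (@ge 18 8 isT isT isT isT) (@ge 8 0 isT isT isT isT); [ by case: (N_0_18 C) | by case: (@gn 3 8 isT C) ]. }
    have N_0_13 : ~ g 0 13.
    { move=> E. have [C|C] := @c4 0 12 1 13 isT isT P_0_12 (@ge 12 1 isT isT isT isT) (@ge 1 13 isT isT isT isT) (gs E); [ by case: (@gn 0 1 isT C) | by case: (@gn 12 13 isT C) ]. }
    have N_8_13 : ~ g 8 13.
    { move=> E. have [C|C] := @c4 0 3 13 8 isT isT (@ge 0 3 isT isT isT isT) (@ge 3 13 isT isT isT isT) (gs E) (@ge 8 0 isT isT isT isT); [ by case: (N_0_13 C) | by case: (@gn 3 8 isT C) ]. }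
    have [C|[C|[C|[C|C]]]] := @c5 0 3 13 18 8 isT isT (@ge 0 3 isT isT isT isT) (@ge 3 13 isT isT isT isT) (@ge 13 18 isT isT isT isT) (@ge 18 8 isT isT isT isT) (@ge 8 0 isT isT isT isT); [ by case: (N_0_13 C) | by case: (N_0_18 C) | by case: (N_3_18 C) | by case: (@gn 3 8 isT C) | by case: (N_8_13 (gs C)) ].
  }
  {
    case: (classic (g 0 13)) => [P_0_13|N_0_13].
    {
      case: (classic (g 1 8)) => [P_1_8|N_1_8].
      {
        have [C|C] := @c4 0 2 1 8 isT isT (@ge 0 2 isT isT isT isT) (@ge 2 1 isT isT isT isT) P_1_8 (@ge 8 0 isT isT isT isT); [ by case: (@gn 0 1 isT C) | by case: (@gn 2 8 isT C) ].
      }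
      {
        case: (classic (g 1 9)) => [P_1_9|N_1_9].
        {
          have P_3_9 : g 3 9.
          { have [C|[C|[C|[C|C]]]] := @c5 0 3 1 9 8 isT isT (@ge 0 3 isT isT isT isT) (@ge 3 1 isT isT isT isT) P_1_9 (@ge 9 8 isT isT isT isT) (@ge 8 0 isT isT isT isT); [ by case: (@gn 0 1 isT C) | by case: (@gn 0 9 isT C) | exact: C | by case: (@gn 3 8 isT C) | by case: (N_1_8 C) ]. }
          have [C|C] := @c4 0 3 9 8 isT isT (@ge 0 3 isT isT isT isT) P_3_9 (@ge 9 8 isT isT isT isT) (@ge 8 0 isT isT isT isT); [ by case: (@gn 0 9 isT C) | by case: (@gn 3 8 isT C) ].
        }
        {
          case: (classic (g 2 9)) => [P_2_9|N_2_9].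
          {
            have [C|C] := @c4 0 2 9 8 isT isT (@ge 0 2 isT isT isT isT) P_2_9 (@ge 9 8 isT isT isT isT) (@ge 8 0 isT isT isT isT); [ by case: (@gn 0 9 isT C) | by case: (@gn 2 8 isT C) ].
          }
          {
            case: (classic (g 1 19)) => [P_1_19|N_1_19].
            {
              case: (classic (g 2 19)) => [P_2_19|N_2_19].
              {
                have N_8_19 : ~ g 8 19.
                { move=> E. have [C|C] := @c4 0 2 19 8 isT isT (@ge 0 2 isT isT isT isT) P_2_19 (gs E) (@ge 8 0 isT isT isT isT); [ by case: (N_0_19 C) | by case: (@gn 2 8 isT C) ]. }
                have [C|[C|[C|[C|C]]]] := @c5 0 2 19 9 8 isT isT (@ge 0 2 isT isT isT isT) P_2_19 (@ge 19 9 isT isT isT isT) (@ge 9 8 isT isT isT isT) (@ge 8 0 isT isT isT isT); [ by case: (N_0_19 C) | by case: (@gn 0 9 isT C) | by case: (N_2_9 C) | by case: (@gn 2 8 isT C) | by case: (N_8_19 (gs C)) ].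
              }
              {
                have N_8_19 : ~ g 8 19.
                { move=> E. have [C|[C|[C|[C|C]]]] := @c5 0 2 1 19 8 isT isT (@ge 0 2 isT isT isT isT) (@ge 2 1 isT isT isT isT) P_1_19 (gs E) (@ge 8 0 isT isT isT isT); [ by case: (@gn 0 1 isT C) | by case: (N_0_19 C) | by case: (N_2_19 C) | by case: (@gn 2 8 isT C) | by case: (N_1_8 C) ]. }
                have [C|[C|[C|[C|[C|[C|[C|[C|C]]]]]]]] := @c6 0 2 1 19 9 8 isT isT (@ge 0 2 isT isT isT isT) (@ge 2 1 isT isT isT isT) P_1_19 (@ge 19 9 isT isT isT isT) (@ge 9 8 isT isT isT isT) (@ge 8 0 isT isT isT isT); [ by case: (@gn 0 1 isT C) | by case: (N_0_19 C) | by case: (@gn 0 9 isT C) | by case: (N_2_19 C) | by case: (N_2_9 C) | by case: (@gn 2 8 isT C) | by case: (N_1_9 C) | by case: (N_1_8 C) | by case: (N_8_19 (gs C)) ].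
              }
            }
            {
              have N_8_12 : ~ g 8 12.
              { move=> E. have [C|C] := @c4 0 2 12 8 isT isT (@ge 0 2 isT isT isT isT) (@ge 2 12 isT isT isT isT) (gs E) (@ge 8 0 isT isT isT isT); [ by case: (N_0_12 C) | by case: (@gn 2 8 isT C) ]. }
              have P_8_13 : g 8 13.
              { have [C|C] := @c4 0 8 18 13 isT isT (@ge 0 8 isT isT isT isT) (@ge 8 18 isT isT isT isT) (@ge 18 13 isT isT isT isT) (gs P_0_13); [ by case: (N_0_18 C) | exact: C ]. }
              have N_9_12 : ~ g 9 12.
              { move=> E. have [C|[C|[C|[C|C]]]] := @c5 0 2 12 9 8 isT isT (@ge 0 2 isT isT isT isT) (@ge 2 12 isT isT isT isT) (gs E) (@ge 9 8 isT isT isT isT) (@ge 8 0 isT isT isT isT); [ by case: (N_0_12 C) | by case: (@gn 0 9 isT C) | by case: (N_2_9 C) | by case: (@gn 2 8 isT C) | by case: (N_8_12 (gs C)) ]. }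
              have N_13_19 : ~ g 13 19.
              { move=> E. have [C|C] := @c4 1 12 19 13 isT isT (@ge 1 12 isT isT isT isT) (@ge 12 19 isT isT isT isT) (gs E) (@ge 13 1 isT isT isT isT); [ by case: (N_1_19 C) | by case: (@gn 12 13 isT C) ]. }
              have N_8_19 : ~ g 8 19.
              { move=> E. have [C|[C|[C|[C|C]]]] := @c5 1 12 19 8 13 isT isT (@ge 1 12 isT isT isT isT) (@ge 12 19 isT isT isT isT) (gs E) P_8_13 (@ge 13 1 isT isT isT isT); [ by case: (N_1_19 C) | by case: (N_1_8 C) | by case: (N_8_12 (gs C)) | by case: (@gn 12 13 isT C) | by case: (N_13_19 (gs C)) ]. }
              have P_9_13 : g 9 13.
              { have [C|[C|[C|[C|[C|[C|[C|[C|C]]]]]]]] := @c6 1 12 19 9 8 13 isT isT (@ge 1 12 isT isT isT isT) (@ge 12 19 isT isT isT isT) (@ge 19 9 isT isT isT isT) (@ge 9 8 isT isT isT isT) P_8_13 (@ge 13 1 isT isT isT isT); [ by case: (N_1_19 C) | by case: (N_1_9 C) | by case: (N_1_8 C) | by case: (N_9_12 (gs C)) | by case: (N_8_12 (gs C)) | by case: (@gn 12 13 isT C) | by case: (N_8_19 (gs C)) | by case: (N_13_19 (gs C)) | exact: C ]. }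
              have [C|[C|[C|[C|C]]]] := @c5 1 12 19 9 13 isT isT (@ge 1 12 isT isT isT isT) (@ge 12 19 isT isT isT isT) (@ge 19 9 isT isT isT isT) P_9_13 (@ge 13 1 isT isT isT isT); [ by case: (N_1_19 C) | by case: (N_1_9 C) | by case: (N_9_12 (gs C)) | by case: (@gn 12 13 isT C) | by case: (N_13_19 (gs C)) ].
            }
          }
        }
      }
    }
    {
      have N_3_18 : ~ g 3 18.
      { move=> E. have [C|C] := @c4 0 3 18 8 isT isT (@ge 0 3 isT isT isT isT) E (@ge 18 8 isT isT isT isT) (@ge 8 0 isT isT isT isT); [ by case: (N_0_18 C) | by case: (@gn 3 8 isT C) ]. }
      have N_8_13 : ~ g 8 13.
      { move=> E. have [C|C] := @c4 0 3 13 8 isT isT (@ge 0 3 isT isT isT isT) (@ge 3 13 isT isT isT isT) (gs E) (@ge 8 0 isT isT isT isT); [ by case: (N_0_13 C) | by case: (@gn 3 8 isT C) ]. }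
      have [C|[C|[C|[C|C]]]] := @c5 0 3 13 18 8 isT isT (@ge 0 3 isT isT isT isT) (@ge 3 13 isT isT isT isT) (@ge 13 18 isT isT isT isT) (@ge 18 8 isT isT isT isT) (@ge 8 0 isT isT isT isT); [ by case: (N_0_13 C) | by case: (N_0_18 C) | by case: (N_3_18 C) | by case: (@gn 3 8 isT C) | by case: (N_8_13 (gs C)) ].
    }
  }
Qed.

Lemma caseX : g 0 18 -> forall P R, (P = 12 \/ P = 18 \/ P = 24) -> (R = 0 \/ R = 1 \/ R = 2 \/ R = 3 \/ R = 8) -> g P R.
Proof.
move=> h0.
have h1 := gs (cx_SX_B h0).
have h2 := gs (cx_SX_HnX h0 h1).
have h3 := gs (cx_SX_F h0 h1 h2).
have h4 := gs (cx_KX_A h0 h1 h2 h3).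
have h5 := gs (cx_KX_HX h0 h1 h2 h3 h4).
have h6 := gs (cx_KX_HnX h0 h1 h2 h3 h4 h5).
have h7 := gs (cx_LX_B h0 h1 h2 h3 h4 h5 h6).
have h8 := gs (cx_LX_F h0 h1 h2 h3 h4 h5 h6 h7).
have h9 := gs (cx_LX_A h0 h1 h2 h3 h4 h5 h6 h7 h8).
have h10 := gs (cx_LX_HX h0 h1 h2 h3 h4 h5 h6 h7 h8 h9).
have h11 := gs (cx_LX_HnX h0 h1 h2 h3 h4 h5 h6 h7 h8 h9 h10).
move=> P R [->|[->|->]] [->|[->|[->|[->|->]]]]; try by apply: gs.
all: try by [].
all: by apply: ge.
Qed.

Lemma caseN : g 0 19 -> forall P R, (P = 13 \/ P = 19) -> (R = 0 \/ R = 1 \/ R = 2 \/ R = 3 \/ R = 8) -> g P R.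
Proof.
move=> h0.
have h1 := gs (cn_KnX_F h0).
have h2 := gs (cn_SnX_B h0 h1).
have h3 := gs (cn_SnX_HX h0 h1 h2).
have h4 := gs (cn_SnX_F h0 h1 h2 h3).
have h5 := gs (cn_KnX_A h0 h1 h2 h3 h4).
have h6 := gs (cn_KnX_HnX h0 h1 h2 h3 h4 h5).
have h7 := gs (cn_KnX_HX h0 h1 h2 h3 h4 h5 h6).
move=> P R [->|->] [->|[->|[->|[->|->]]]]; try by apply: gs.
all: try by [].
all: by apply: ge.
Qed.

Lemma caseA : g 0 18 \/ g 0 19.
Proof.
case: (classic (g 0 18)) => h; first by left.
by right; apply: gs; apply: ca_KnX_B.
Qed.

End Abs.

Local Open Scope fset_scope.

Lemma fset2C (T : choiceType) (a b : T) : [fset a; b] = [fset b; a].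
Proof. by apply/fsetP => x; rewrite !inE orbC. Qed.

Lemma fset2_eq (T : choiceType) (u1 u2 v1 v2 : T) : [fset u1; u2] = [fset v1; v2] ->
  [/\ u1 = v1 \/ u1 = v2, u2 = v1 \/ u2 = v2, v1 = u1 \/ v1 = u2 & v2 = u1 \/ v2 = u2].
Proof.
move=> E.
have m x : (x \in [fset u1; u2]) = (x \in [fset v1; v2]) by rewrite E.
have h1 : u1 = v1 \/ u1 = v2 by move: (m u1); rewrite !inE eqxx /= => /esym /orP [] /eqP; auto.
have h2 : u2 = v1 \/ u2 = v2 by move: (m u2); rewrite !inE eqxx orbT /= => /esym /orP [] /eqP; auto.
have h3 : v1 = u1 \/ v1 = u2 by move: (m v1); rewrite !inE eqxx /= => /orP [] /eqP; auto.
have h4 : v2 = u1 \/ v2 = u2 by move: (m v2); rewrite !inE eqxx orbT /= => /orP [] /eqP; auto.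
by split.
Qed.

Lemma fsetI_neq0 (T : choiceType) (x : T) (A B : {fset T}) : x \in A -> x \in B -> A `&` B != fset0.
Proof. by move=> xa xb; apply/eqP => /fsetP /(_ x); rewrite !inE xa xb. Qed.

Lemma neglK (W : lit) : negl (negl W) = W.
Proof. by case: W => a b; rewrite /negl /= negbK. Qed.

Lemma A_lit (W : lit) : A W.1 = [fset EAlpha W; EAlpha (negl W)].
Proof. by case: W => i [|]; [exact: erefl | exact: fset2C]. Qed.


Section Conc.
Variables (n : nat) (cl : seq clause).

Lemma forbC a b : forb n cl a b -> forb n cl b a.
Proof. by rewrite /forb; case; auto. Qed.
Lemma forb_QV a b : forb n cl a b -> QV n cl a.
Proof. by move=> h; exists b. Qed.

Lemma forb_AB i : 1 <= i <= n -> forb n cl (A i) B.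
Proof. by move=> hi; left; left; exists i. Qed.
Lemma forb_DB j p : 1 <= j <= m cl -> 1 <= p <= 3 -> forb n cl (D j p) B.
Proof. by move=> hj hp; left; right; left; exists j, p. Qed.
Lemma forb_SS i j : 1 <= i <= n -> inDelta cl i j -> forb n cl (S j (posv i)) (S j (negv i)).
Proof. by move=> hi hj; left; right; right; left; exists i, j, j. Qed.
Lemma forb_HFp i j : 1 <= i <= n -> 1 <= j <= m cl -> forb n cl (H (posv i)) (F j).
Proof. by move=> hi hj; left; do 6 right; left; exists i, j; split; [|split; [|split; [right|]]] => //. Qed.
Lemma forb_HFn i j : 1 <= i <= n -> 1 <= j <= m cl -> forb n cl (H (negv i)) (F j).
Proof. by move=> hi hj; left; do 6 right; left; exists i, j; split; [|split; [|split; [left|]]] => //. Qed.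

Lemma forb_gadget j c1 c2 c3 : clause_of cl j = (c1, c2, c3) -> 1 <= j <= m cl ->
  forb n cl (K cl j (negl c1)) (K cl j c1) /\ forb n cl (K cl j (negl c2)) (K cl j c2) /\
  forb n cl (K cl j (negl c3)) (K cl j c3) /\ forb n cl (K cl j (negl c1)) (L cl j c1) /\
  forb n cl (K cl j (negl c2)) (L cl j c2) /\ forb n cl (K cl j (negl c3)) (L cl j c3) /\
  forb n cl (S j c2) (K cl j c1) /\ forb n cl (S j c3) (K cl j c2) /\
  forb n cl (S j c1) (K cl j c3) /\ forb n cl (S j c3) (L cl j c1) /\
  forb n cl (S j c1) (L cl j c2) /\ forb n cl (S j c2) (L cl j c3).
Proof.
move=> Ec hj.
have G : forall P P', (let: (X, Y, Z) := clause_of cl j in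
        ((P = K cl j (negl X) /\ P' = K cl j X) \/ (P = K cl j (negl Y) /\ P' = K cl j Y) \/
         (P = K cl j (negl Z) /\ P' = K cl j Z) \/ (P = K cl j (negl X) /\ P' = L cl j X) \/
         (P = K cl j (negl Y) /\ P' = L cl j Y) \/ (P = K cl j (negl Z) /\ P' = L cl j Z) \/
         (P = S j Y /\ P' = K cl j X) \/ (P = S j Z /\ P' = K cl j Y) \/
         (P = S j X /\ P' = K cl j Z) \/ (P = S j Z /\ P' = L cl j X) \/
         (P = S j X /\ P' = L cl j Y) \/ (P = S j Y /\ P' = L cl j Z))) -> forb n cl P P'.
  by move=> P P' h; left; do 7 right; exists j; split.
rewrite Ec in G.
split; first by apply: G; do 0 right; left.
split; first by apply: G; do 1 right; left.
split; first by apply: G; do 2 right; left.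
split; first by apply: G; do 3 right; left.
split; first by apply: G; do 4 right; left.
split; first by apply: G; do 5 right; left.
split; first by apply: G; do 6 right; left.
split; first by apply: G; do 7 right; left.
split; first by apply: G; do 8 right; left.
split; first by apply: G; do 9 right; left.
split; first by apply: G; do 10 right; left.
by apply: G; do 11 right.
Qed.
End Conc.


Definition vf (cl : seq clause) (j gX gY gZ : nat) (X Y Z : lit) (a : nat) : vtx :=
  nth fset0 [:: B; A X.1; H X; H (negl X); H Y; H (negl Y); H Z; H (negl Z); F j;
    D j gX; D j gY; D j gZ; S j X; S j (negl X); S j Y; S j (negl Y); S j Z; S j (negl Z);
    K cl j X; K cl j (negl X); K cl j Y; K cl j (negl Y); K cl j Z; K cl j (negl Z);
    L cl j X; L cl j Y; L cl j Z] a.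
Definition ef (j gX gY gZ : nat) (X Y Z : lit) (a : nat) : elt :=
  nth EMu [:: EMu; EDelta; ELambda j; EGamma j gX; EGamma j gY; EGamma j gZ;
    EAlpha X; EAlpha (negl X); EAlpha Y; EAlpha (negl Y); EAlpha Z; EAlpha (negl Z);
    EBeta j X; EBeta j (negl X); EBeta j Y; EBeta j (negl Y); EBeta j Z; EBeta j (negl Z)] a.
Definition litidx (X Y Z W : lit) : nat :=
  if W == X then 0 else if W == negl X then 1 else if W == Y then 2
  else if W == negl Y then 3 else if W == Z then 4 else 5.
Definition gidx (gX gY p : nat) : nat := if p == gX then 0 else if p == gY then 1 else 2.
Definition keyf (gX gY : nat) (X Y Z : lit) (el : elt) : nat :=
  match el with
  | EMu => 0 | EDelta => 1 | ELambda _ => 2 | EGamma _ p => 3 + gidx gX gY p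
  | EAlpha W => 6 + litidx X Y Z W | EBeta _ W => 12 + litidx X Y Z W
  end.

Lemma nbF (b : bool) : (~~ b == b) = false. Proof. by case: b. Qed.
Lemma bnF (b : bool) : (b == ~~ b) = false. Proof. by case: b. Qed.

Lemma keyE j gX gY gZ x bx y b2 z bz :
  x != y -> x != z -> y != z -> gX != gY -> gX != gZ -> gY != gZ ->
  forall a, a < 18 ->
  keyf gX gY (x,bx) (y,b2) (z,bz) (ef j gX gY gZ (x,bx) (y,b2) (z,bz) a) = a.
Proof.
move=> hxy hxz hyz h1 h2 h3.
have hyx : (y == x) = false by rewrite eq_sym (negbTE hxy).
have hzx : (z == x) = false by rewrite eq_sym (negbTE hxz).
have hzy : (z == y) = false by rewrite eq_sym (negbTE hyz).
have h1' : (gY == gX) = false by rewrite eq_sym (negbTE h1).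
have h2' : (gZ == gX) = false by rewrite eq_sym (negbTE h2).
have h3' : (gZ == gY) = false by rewrite eq_sym (negbTE h3).
move=> a; do 18 (case: a => [|a]; first by move=> _; rewrite /ef /keyf /litidx /gidx /negl /= ?xpair_eqE ?eqxx ?nbF ?bnF ?hyx ?hzx ?hzy ?h1' ?h2' ?h3' /=).
done.
Qed.


Section Main.
Variables (n : nat) (cl : seq clause) (G' : vtx -> vtx -> Prop).
Hypothesis sw : chordal_sandwich (QV n cl) (int_star n cl) (forb n cl) G'.

Lemma Gsym a b : G' a b -> G' b a.
Proof. by case: sw => [[s _] _ _ _]; apply: s. Qed.
Lemma Gforb a b : forb n cl a b -> ~ G' a b.
Proof. by case: sw => _ _ _ h; apply: h. Qed.
Lemma Gint a b : int_star n cl a b -> G' a b.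
Proof. by case: sw => _ _ h _; apply: h. Qed.
Lemma Gch : chordal (QV n cl) G'.
Proof. by case: sw. Qed.

Lemma main_rot j gX gY gZ (X Y Z : lit) :
  X.1 != Y.1 -> X.1 != Z.1 -> Y.1 != Z.1 -> gX != gY -> gX != gZ -> gY != gZ ->
  K cl j X = [fset EBeta j (negl X); ELambda j] ->
  K cl j (negl X) = [fset EBeta j X; EGamma j gX] ->
  K cl j Y = [fset EBeta j (negl Y); ELambda j] ->
  K cl j (negl Y) = [fset EBeta j Y; EGamma j gY] ->
  K cl j Z = [fset EBeta j (negl Z); ELambda j] ->
  K cl j (negl Z) = [fset EBeta j Z; EGamma j gZ] ->
  Lopt cl j X = Some [fset EBeta j (negl X); EGamma j gY] ->
  Lopt cl j Y = Some [fset EBeta j (negl Y); EGamma j gZ] ->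
  Lopt cl j Z = Some [fset EBeta j (negl Z); EGamma j gX] ->
  Lopt cl j (negl X) = None ->
  (forall k, k < 25 -> forb n cl (vf cl j gX gY gZ X Y Z (nth (0,0) flist k).1)
                                 (vf cl j gX gY gZ X Y Z (nth (0,0) flist k).2)) ->
  (G' (K cl j X) B \/ G' (K cl j (negl X)) B) /\
  (forall W, (W = X \/ W = negl X) -> G' (K cl j W) B ->
     forall P, (P = S j W \/ P = K cl j W \/ Lopt cl j W = Some P) ->
     forall R, (R = B \/ R = A X.1 \/ R = H W \/ R = H (negl W) \/ R = F j) -> G' P R).
Proof.
move: X Y Z => [x bx] [y b2] [z bz] hxy hxz hyz hg1 hg2 hg3 KX KnX KY KnY KZ KnZ LX LY LZ LnX FB.
pose f := vf cl j gX gY gZ (x,bx) (y,b2) (z,bz).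
pose e := ef j gX gY gZ (x,bx) (y,b2) (z,bz).
have kE := keyE j bx b2 bz hxy hxz hyz hg1 hg2 hg3.
have e_inj : forall a b, a < 18 -> b < 18 -> e a = e b -> a = b.
  by move=> a b ha hb /(congr1 (keyf gX gY (x,bx) (y,b2) (z,bz))); rewrite !kE.
have fE : forall a, a < 27 -> f a = [fset e (pr a).1; e (pr a).2].
  move=> a.
  case: a => [_|a]; first exact: erefl.
  case: a => [_|a]; first exact: (A_lit (x,bx)).
  case: a => [_|a]; first exact: erefl.
  case: a => [_|a]; first exact: erefl.
  case: a => [_|a]; first exact: erefl.
  case: a => [_|a]; first exact: erefl.
  case: a => [_|a]; first exact: erefl.
  case: a => [_|a]; first exact: erefl.
  case: a => [_|a]; first exact: erefl.
  case: a => [_|a]; first exact: erefl.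
  case: a => [_|a]; first exact: erefl.
  case: a => [_|a]; first exact: erefl.
  case: a => [_|a]; first exact: erefl.
  case: a => [_|a]; first exact: erefl.
  case: a => [_|a]; first exact: erefl.
  case: a => [_|a]; first exact: erefl.
  case: a => [_|a]; first exact: erefl.
  case: a => [_|a]; first exact: erefl.
  case: a => [_|a]; first exact: KX.
  case: a => [_|a]; first exact: KnX.
  case: a => [_|a]; first exact: KY.
  case: a => [_|a]; first exact: KnY.
  case: a => [_|a]; first exact: KZ.
  case: a => [_|a]; first exact: KnZ.
  case: a => [_|a]; first exact: (congr1 (odflt fset0) LX).
  case: a => [_|a]; first exact: (congr1 (odflt fset0) LY).
  case: a => [_|a]; first exact: (congr1 (odflt fset0) LZ).
  done.
have q : forall u v, u < 18 -> v < 18 -> e u = e v -> u == v.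
  by move=> u v hu hv /(e_inj _ _ hu hv) ->.
have f_inj : forall a b, a < 27 -> b < 27 -> f a = f b -> a = b.
  move=> a b ha hb; rewrite (fE a ha) (fE b hb) => /fset2_eq [h1 h2 h3 h4].
  case: (pr_lt ha) (pr_lt hb) => la1 la2 [lb1 lb2].
  apply: pr_inj ha hb _; rewrite /samep.
  apply/and4P; split.
  - by case: h1 => [/(q _ _ la1 lb1)|/(q _ _ la1 lb2)] ->; rewrite ?orbT.
  - by case: h2 => [/(q _ _ la2 lb1)|/(q _ _ la2 lb2)] ->; rewrite ?orbT.
  - by case: h3 => [/(q _ _ lb1 la1)|/(q _ _ lb1 la2)] ->; rewrite ?orbT.
  - by case: h4 => [/(q _ _ lb2 la1)|/(q _ _ lb2 la2)] ->; rewrite ?orbT.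
have FBb : forall a b, forbb a b -> forb n cl (f a) (f b).
  move=> a b; rewrite /forbb => /orP [] /(nthP (0,0)) [k hk hkE].
  - by have := FB k hk; rewrite hkE.
  - by apply: forbC; have := FB k hk; rewrite hkE.
have QVf : forall a, a < 27 -> QV n cl (f a).
  by move=> a ha; apply: (@forb_QV _ _ _ (f (partner a))); apply: FBb; apply: partner_ok.
pose g := fun a b => G' (f a) (f b).
have gs : forall a b, g a b -> g b a by move=> a b; apply: Gsym.
have gn : forall a b, forbb a b -> ~ g a b by move=> a b h; apply: Gforb; apply: FBb.
have ge : forall a b, a < 27 -> b < 27 -> a != b -> shares a b -> g a b.
  move=> a b ha hb hab hs; apply: Gint; split; first exact: QVf.
  split; first exact: QVf.
  split.
    by apply/negP => /eqP /(f_inj _ _ ha hb) /eqP; apply/negP.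
  rewrite (fE a ha) (fE b hb); move: hs; rewrite /shares => /or4P [] /eqP E.
  - by apply: (@fsetI_neq0 _ (e (pr a).1)); rewrite !inE ?E eqxx ?orbT.
  - by apply: (@fsetI_neq0 _ (e (pr a).1)); rewrite !inE ?E eqxx ?orbT.
  - by apply: (@fsetI_neq0 _ (e (pr a).2)); rewrite !inE ?E eqxx ?orbT.
  - by apply: (@fsetI_neq0 _ (e (pr a).2)); rewrite !inE ?E eqxx ?orbT.
have ch : forall s : seq nat, 4 <= size s -> uniq s -> all (fun x => x < 27) s ->
  (forall k, k < size s -> g (nth 0 s k) (nth 0 s (k.+1 %% size s))) ->
  exists k l, [/\ k < size s, l < size s, k != l,
                 (l != k.+1 %% size s) && (k != l.+1 %% size s) &
                 g (nth 0 s k) (nth 0 s l)].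
  move=> s hs us as_ ed.
  have fin : {in s &, injective f}.
    by move=> u v /(allP as_) hu /(allP as_) hv; apply: f_inj.
  have s0 : 0 < size s by apply: leq_trans hs.
  have := @Gch (map f s) (f 0); rewrite size_map.
  case/(_ hs (etrans (map_inj_in_uniq fin) us)).
  - by move=> v /mapP [u hu ->]; apply: QVf; apply: (allP as_).
  - move=> k hk; rewrite !(nth_map 0) //; last by rewrite ltn_pmod.
    exact: ed.
  move=> k [l [h1 h2 h3 h4 h5]]; exists k, l; split => //.
  by move: h5; rewrite !(nth_map 0).
have CA := caseA gs ch ge gn.
have CX := caseX gs ch ge gn.
have CN := caseN gs ch ge gn.
split.
  by case: CA => h; [left|right]; apply: Gsym; apply: h.
move=> W [->|->] hK P HP R HR.
- have h0 : g 0 18 by apply: Gsym.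
  have [Pi [HPi EP]] : exists Pi, (Pi = 12 \/ Pi = 18 \/ Pi = 24) /\ f Pi = P.
    case: HP => [->|[->|HL]].
    + by exists 12; split; [left|].
    + by exists 18; split; [right; left|].
    + exists 24; split; [right; right|] => //.
      by rewrite LX in HL; case: HL => <-; exact: (congr1 (odflt fset0) LX).
  have [Ri [HRi ER]] : exists Ri, (Ri = 0 \/ Ri = 1 \/ Ri = 2 \/ Ri = 3 \/ Ri = 8) /\ f Ri = R.
    case: HR => [->|[->|[->|[->|->]]]].
    + by exists 0; split; [left|].
    + by exists 1; split; [right; left|].
    + by exists 2; split; [right; right; left|].
    + by exists 3; split; [right; right; right; left|].
    + by exists 8; split; [right; right; right; right|].
  by rewrite -EP -ER; apply: (CX h0 Pi Ri HPi HRi).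
- have h0 : g 0 19 by apply: Gsym.
  have [Pi [HPi EP]] : exists Pi, (Pi = 13 \/ Pi = 19) /\ f Pi = P.
    case: HP => [->|[->|HL]].
    + by exists 13; split; [left|].
    + by exists 19; split; [right|].
    + by rewrite LnX in HL.
  have [Ri [HRi ER]] : exists Ri, (Ri = 0 \/ Ri = 1 \/ Ri = 2 \/ Ri = 3 \/ Ri = 8) /\ f Ri = R.
    case: HR => [->|[->|[->|[->|->]]]].
    + by exists 0; split; [left|].
    + by exists 1; split; [right; left|].
    + by exists 3; split; [right; right; right; left|].
    + by exists 2; split; [right; right; left|rewrite neglK].
    + by exists 8; split; [right; right; right; right|].
  by rewrite -EP -ER; apply: (CN h0 Pi Ri HPi HRi).
Qed.
End Main.


Section Ev.
Variables (cl : seq clause) (j a1 a2 a3 : nat) (s1 s2 s3 : bool).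
Hypothesis Ec : clause_of cl j = ((a1,s1),(a2,s2),(a3,s3)).
Hypotheses (h12 : a1 != a2) (h13 : a1 != a3) (h23 : a2 != a3).
Let h21 : (a2 == a1) = false. Proof. by rewrite eq_sym (negbTE h12). Qed.
Let h31 : (a3 == a1) = false. Proof. by rewrite eq_sym (negbTE h13). Qed.
Let h32 : (a3 == a2) = false. Proof. by rewrite eq_sym (negbTE h23). Qed.

Lemma KE1 : K cl j (a1,s1) = [fset EBeta j (negl (a1,s1)); ELambda j].
Proof. by rewrite /K /Lopt /pos /lit_at Ec /= ?(negbTE h12) ?(negbTE h13) ?(negbTE h23) ?h21 ?h31 ?h32 ?eqxx /= ?xpair_eqE ?eqxx ?bnF ?nbF ?andbF ?andbT ?neglK. Qed.

Lemma KnE1 : K cl j (negl (a1,s1)) = [fset EBeta j (a1,s1); EGamma j 1].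
Proof. by rewrite /K /Lopt /pos /lit_at Ec /= ?(negbTE h12) ?(negbTE h13) ?(negbTE h23) ?h21 ?h31 ?h32 ?eqxx /= ?xpair_eqE ?eqxx ?bnF ?nbF ?andbF ?andbT ?neglK. Qed.

Lemma LE1 : Lopt cl j (a1,s1) = Some [fset EBeta j (negl (a1,s1)); EGamma j 2].
Proof. by rewrite /K /Lopt /pos /lit_at Ec /= ?(negbTE h12) ?(negbTE h13) ?(negbTE h23) ?h21 ?h31 ?h32 ?eqxx /= ?xpair_eqE ?eqxx ?bnF ?nbF ?andbF ?andbT ?neglK. Qed.

Lemma LnE1 : Lopt cl j (negl (a1,s1)) = None.
Proof. by rewrite /K /Lopt /pos /lit_at Ec /= ?(negbTE h12) ?(negbTE h13) ?(negbTE h23) ?h21 ?h31 ?h32 ?eqxx /= ?xpair_eqE ?eqxx ?bnF ?nbF ?andbF ?andbT ?neglK. Qed.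

Lemma KE2 : K cl j (a2,s2) = [fset EBeta j (negl (a2,s2)); ELambda j].
Proof. by rewrite /K /Lopt /pos /lit_at Ec /= ?(negbTE h12) ?(negbTE h13) ?(negbTE h23) ?h21 ?h31 ?h32 ?eqxx /= ?xpair_eqE ?eqxx ?bnF ?nbF ?andbF ?andbT ?neglK. Qed.

Lemma KnE2 : K cl j (negl (a2,s2)) = [fset EBeta j (a2,s2); EGamma j 2].
Proof. by rewrite /K /Lopt /pos /lit_at Ec /= ?(negbTE h12) ?(negbTE h13) ?(negbTE h23) ?h21 ?h31 ?h32 ?eqxx /= ?xpair_eqE ?eqxx ?bnF ?nbF ?andbF ?andbT ?neglK. Qed.

Lemma LE2 : Lopt cl j (a2,s2) = Some [fset EBeta j (negl (a2,s2)); EGamma j 3].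
Proof. by rewrite /K /Lopt /pos /lit_at Ec /= ?(negbTE h12) ?(negbTE h13) ?(negbTE h23) ?h21 ?h31 ?h32 ?eqxx /= ?xpair_eqE ?eqxx ?bnF ?nbF ?andbF ?andbT ?neglK. Qed.

Lemma LnE2 : Lopt cl j (negl (a2,s2)) = None.
Proof. by rewrite /K /Lopt /pos /lit_at Ec /= ?(negbTE h12) ?(negbTE h13) ?(negbTE h23) ?h21 ?h31 ?h32 ?eqxx /= ?xpair_eqE ?eqxx ?bnF ?nbF ?andbF ?andbT ?neglK. Qed.

Lemma KE3 : K cl j (a3,s3) = [fset EBeta j (negl (a3,s3)); ELambda j].
Proof. by rewrite /K /Lopt /pos /lit_at Ec /= ?(negbTE h12) ?(negbTE h13) ?(negbTE h23) ?h21 ?h31 ?h32 ?eqxx /= ?xpair_eqE ?eqxx ?bnF ?nbF ?andbF ?andbT ?neglK. Qed.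

Lemma KnE3 : K cl j (negl (a3,s3)) = [fset EBeta j (a3,s3); EGamma j 3].
Proof. by rewrite /K /Lopt /pos /lit_at Ec /= ?(negbTE h12) ?(negbTE h13) ?(negbTE h23) ?h21 ?h31 ?h32 ?eqxx /= ?xpair_eqE ?eqxx ?bnF ?nbF ?andbF ?andbT ?neglK. Qed.

Lemma LE3 : Lopt cl j (a3,s3) = Some [fset EBeta j (negl (a3,s3)); EGamma j 1].
Proof. by rewrite /K /Lopt /pos /lit_at Ec /= ?(negbTE h12) ?(negbTE h13) ?(negbTE h23) ?h21 ?h31 ?h32 ?eqxx /= ?xpair_eqE ?eqxx ?bnF ?nbF ?andbF ?andbT ?neglK. Qed.

Lemma LnE3 : Lopt cl j (negl (a3,s3)) = None.
Proof. by rewrite /K /Lopt /pos /lit_at Ec /= ?(negbTE h12) ?(negbTE h13) ?(negbTE h23) ?h21 ?h31 ?h32 ?eqxx /= ?xpair_eqE ?eqxx ?bnF ?nbF ?andbF ?andbT ?neglK. Qed.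
End Ev.


Section Loc.
Variables (n : nat) (cl : seq clause).

Lemma FBgen j gX gY gZ X Y Z :
  forb n cl (A X.1) B ->
  forb n cl (S j X) (S j (negl X)) -> forb n cl (S j Y) (S j (negl Y)) -> forb n cl (S j Z) (S j (negl Z)) ->
  forb n cl (H X) (F j) -> forb n cl (H (negl X)) (F j) -> forb n cl (H Y) (F j) ->
  forb n cl (H (negl Y)) (F j) -> forb n cl (H Z) (F j) -> forb n cl (H (negl Z)) (F j) ->
  forb n cl (D j gX) B -> forb n cl (D j gY) B -> forb n cl (D j gZ) B ->
  forb n cl (K cl j (negl X)) (K cl j X) -> forb n cl (K cl j (negl Y)) (K cl j Y) ->
  forb n cl (K cl j (negl Z)) (K cl j Z) ->
  forb n cl (K cl j (negl X)) (L cl j X) -> forb n cl (K cl j (negl Y)) (L cl j Y) ->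
  forb n cl (K cl j (negl Z)) (L cl j Z) ->
  forb n cl (S j Y) (K cl j X) -> forb n cl (S j Z) (K cl j Y) -> forb n cl (S j X) (K cl j Z) ->
  forb n cl (S j Z) (L cl j X) -> forb n cl (S j X) (L cl j Y) -> forb n cl (S j Y) (L cl j Z) ->
  forall k, k < 25 -> forb n cl (vf cl j gX gY gZ X Y Z (nth (0,0) flist k).1)
                                 (vf cl j gX gY gZ X Y Z (nth (0,0) flist k).2).
Proof.
move=> f1 f2 f3 f4 f5 f6 f7 f8 f9 f10 f11 f12 f13 f14 f15 f16 f17 f18 f19 f20 f21 f22 f23 f24 f25 k.
case: k => [_|k]; first exact: f1.
case: k => [_|k]; first exact: f2.
case: k => [_|k]; first exact: f3.
case: k => [_|k]; first exact: f4.
case: k => [_|k]; first exact: f5.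
case: k => [_|k]; first exact: f6.
case: k => [_|k]; first exact: f7.
case: k => [_|k]; first exact: f8.
case: k => [_|k]; first exact: f9.
case: k => [_|k]; first exact: f10.
case: k => [_|k]; first exact: f11.
case: k => [_|k]; first exact: f12.
case: k => [_|k]; first exact: f13.
case: k => [_|k]; first exact: f14.
case: k => [_|k]; first exact: f15.
case: k => [_|k]; first exact: f16.
case: k => [_|k]; first exact: f17.
case: k => [_|k]; first exact: f18.
case: k => [_|k]; first exact: f19.
case: k => [_|k]; first exact: f20.
case: k => [_|k]; first exact: f21.
case: k => [_|k]; first exact: f22.
case: k => [_|k]; first exact: f23.
case: k => [_|k]; first exact: f24.
case: k => [_|k]; first exact: f25.
by [].
Qed.

Lemma forb_SSl j W : 1 <= W.1 <= n -> inDelta cl W.1 j -> forb n cl (S j W) (S j (negl W)).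
Proof. case: W => i [] hi hD; first exact: forb_SS. by apply: forbC; apply: (forb_SS hi hD). Qed.
Lemma forb_HFl j W : 1 <= W.1 <= n -> 1 <= j <= m cl -> forb n cl (H W) (F j).
Proof. case: W => i [] hi hj; [exact: forb_HFp | exact: forb_HFn]. Qed.

End Loc.


Section Loc2.
Variables (n : nat) (cl : seq clause) (G' : vtx -> vtx -> Prop).
Hypothesis wf : wf_instance n cl.
Hypothesis sw : chordal_sandwich (QV n cl) (int_star n cl) (forb n cl) G'.

Definition concl (i j : nat) (X : lit) : Prop :=
  (G' (K cl j X) B \/ G' (K cl j (negl X)) B) /\
  (forall W, (W = X \/ W = negl X) -> G' (K cl j W) B ->
     forall P, (P = S j W \/ P = K cl j W \/ Lopt cl j W = Some P) ->
     forall R, (R = B \/ R = A X.1 \/ R = H W \/ R = H (negl W) \/ R = F j) -> G' P R).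

Lemma concl_conv i j X : X.1 = i -> concl i j X ->
  (G' (K cl j (posv i)) B \/ G' (K cl j (negv i)) B) /\
  (forall W, (W = posv i \/ W = negv i) -> G' (K cl j W) B ->
     forall P, (P = S j W \/ P = K cl j W \/ Lopt cl j W = Some P) ->
     forall R, (R = B \/ R = A i \/ R = H W \/ R = H (negl W) \/ R = F j) -> G' P R).
Proof.
case: X => a [] <- [h1 h2]; split.
- exact: h1.
- by move=> W hW; apply: h2; case: hW => ->; [left|right].
- by case: h1 => h; [right|left].
- by move=> W hW; apply: h2; case: hW => ->; [right|left].
Qed.

Lemma clause_wf j : 1 <= j <= m cl -> wf_clause n (clause_of cl j).
Proof.
case/andP=> h1 h2; apply: (allP wf); apply: mem_nth.
by rewrite /m in h2; case: j h1 h2 => //= j _ ; rewrite ltnS.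
Qed.


Lemma local i j : inDelta cl i j ->
  (G' (K cl j (posv i)) B \/ G' (K cl j (negv i)) B) /\
  (forall W, (W = posv i \/ W = negv i) -> G' (K cl j W) B ->
     forall P, (P = S j W \/ P = K cl j W \/ Lopt cl j W = Some P) ->
     forall R, (R = B \/ R = A i \/ R = H W \/ R = H (negl W) \/ R = F j) -> G' P R).
Proof.
move=> hD; move: (hD); rewrite /inDelta => /andP [hj hpos].
have := clause_wf hj.
case Ec: (clause_of cl j) => [[[a1 s1] [a2 s2]] [a3 s3]].
rewrite /wf_clause /wf_lit => /and5P [r1 r2 r3 h12 /andP [h13 h23]].
have h21 : a2 != a1 by rewrite eq_sym.
have h31 : a3 != a1 by rewrite eq_sym.
have h32 : a3 != a2 by rewrite eq_sym.
have id1 : inDelta cl a1 j by rewrite /inDelta hj /pos Ec /= eqxx.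
have id2 : inDelta cl a2 j by rewrite /inDelta hj /pos Ec /= (negbTE h12) eqxx.
have id3 : inDelta cl a3 j by rewrite /inDelta hj /pos Ec /= (negbTE h13) (negbTE h23) eqxx.
case: (forb_gadget n Ec hj) => g1 [g2 [g3 [g4 [g5 [g6 [g7 [g8 [g9 [g10 [g11 g12]]]]]]]]]].
move: hpos; rewrite /pos Ec /=.
case: (eqVneq a1 i) => [e1 _|n1] /=.
    apply: (@concl_conv i j (a1,s1)) => //.
    exact: (@main_rot n cl G' sw j 1 2 3 (a1,s1) (a2,s2) (a3,s3) h12 h13 h23 isT isT isT (KE1 Ec h12 h13) (KnE1 Ec h12 h13) (KE2 Ec h12 h23) (KnE2 Ec h12 h23) (KE3 Ec h13 h23) (KnE3 Ec h13 h23) (LE1 Ec h12 h13) (LE2 Ec h12 h23) (LE3 Ec h13 h23) (LnE1 Ec h12 h13) (@FBgen n cl j 1 2 3 (a1,s1) (a2,s2) (a3,s3) (@forb_AB n cl _ r1) (@forb_SSl n cl j (a1,s1) r1 id1) (@forb_SSl n cl j (a2,s2) r2 id2) (@forb_SSl n cl j (a3,s3) r3 id3) (@forb_HFl n cl j (a1,s1) r1 hj) (@forb_HFl n cl j (negl (a1,s1)) r1 hj) (@forb_HFl n cl j (a2,s2) r2 hj) (@forb_HFl n cl j (negl (a2,s2)) r2 hj) (@forb_HFl n cl j (a3,s3) r3 hj) (@forb_HFl n cl j (negl (a3,s3)) r3 hj) (@forb_DB n cl j 1 hj isT) (@forb_DB n cl j 2 hj isT) (@forb_DB n cl j 3 hj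 isT) g1 g2 g3 g4 g5 g6 g7 g8 g9 g10 g11 g12)).
case: (eqVneq a2 i) => [e2 _|n2] /=.
    apply: (@concl_conv i j (a2,s2)) => //.
    exact: (@main_rot n cl G' sw j 2 3 1 (a2,s2) (a3,s3) (a1,s1) h23 h21 h31 isT isT isT (KE2 Ec h12 h23) (KnE2 Ec h12 h23) (KE3 Ec h13 h23) (KnE3 Ec h13 h23) (KE1 Ec h12 h13) (KnE1 Ec h12 h13) (LE2 Ec h12 h23) (LE3 Ec h13 h23) (LE1 Ec h12 h13) (LnE2 Ec h12 h23) (@FBgen n cl j 2 3 1 (a2,s2) (a3,s3) (a1,s1) (@forb_AB n cl _ r2) (@forb_SSl n cl j (a2,s2) r2 id2) (@forb_SSl n cl j (a3,s3) r3 id3) (@forb_SSl n cl j (a1,s1) r1 id1) (@forb_HFl n cl j (a2,s2) r2 hj) (@forb_HFl n cl j (negl (a2,s2)) r2 hj) (@forb_HFl n cl j (a3,s3) r3 hj) (@forb_HFl n cl j (negl (a3,s3)) r3 hj) (@forb_HFl n cl j (a1,s1) r1 hj) (@forb_HFl n cl j (negl (a1,s1)) r1 hj) (@forb_DB n cl j 2 hj isT) (@forb_DB n cl j 3 hj isT) (@forb_DB n cl j 1 hj isT) g2 g3 g1 g5 g6 g4 g8 g9 g7 g11 g12 g10)).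
case: (eqVneq a3 i) => [e3 _|n3] /=.
    apply: (@concl_conv i j (a3,s3)) => //.
    exact: (@main_rot n cl G' sw j 3 1 2 (a3,s3) (a1,s1) (a2,s2) h31 h32 h12 isT isT isT (KE3 Ec h13 h23) (KnE3 Ec h13 h23) (KE1 Ec h12 h13) (KnE1 Ec h12 h13) (KE2 Ec h12 h23) (KnE2 Ec h12 h23) (LE3 Ec h13 h23) (LE1 Ec h12 h13) (LE2 Ec h12 h23) (LnE3 Ec h13 h23) (@FBgen n cl j 3 1 2 (a3,s3) (a1,s1) (a2,s2) (@forb_AB n cl _ r3) (@forb_SSl n cl j (a3,s3) r3 id3) (@forb_SSl n cl j (a1,s1) r1 id1) (@forb_SSl n cl j (a2,s2) r2 id2) (@forb_HFl n cl j (a3,s3) r3 hj) (@forb_HFl n cl j (negl (a3,s3)) r3 hj) (@forb_HFl n cl j (a1,s1) r1 hj) (@forb_HFl n cl j (negl (a1,s1)) r1 hj) (@forb_HFl n cl j (a2,s2) r2 hj) (@forb_HFl n cl j (negl (a2,s2)) r2 hj) (@forb_DB n cl j 3 hj isT) (@forb_DB n cl j 1 hj isT) (@forb_DB n cl j 2 hj isT) g3 g1 g2 g6 g4 g5 g9 g7 g8 g12 g10 g11)).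
by [].
Qed.
End Loc2.


Section Fin.
Variables (n : nat) (cl : seq clause) (G' : vtx -> vtx -> Prop).
Hypothesis wf : wf_instance n cl.
Hypothesis sw : chordal_sandwich (QV n cl) (int_star n cl) (forb n cl) G'.

Lemma cyc4v a b c d : QV n cl a -> QV n cl b -> QV n cl c -> QV n cl d -> uniq [:: a; b; c; d] ->
  G' a b -> G' b c -> G' c d -> G' d a -> G' a c \/ G' b d.
Proof.
move=> Va Vb Vc Vd U e1 e2 e3 e4.
have E : forall k, k < size [:: a; b; c; d] ->
   G' (nth a [:: a; b; c; d] k) (nth a [:: a; b; c; d] (k.+1 %% size [:: a; b; c; d])).
  by case=> [|[|[|[|?]]]] //= _.
have VV : forall x, x \in [:: a; b; c; d] -> QV n cl x.
  by move=> x; rewrite !inE => /or4P [] /eqP ->.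
have [kk [l [hk hl hkl hadj G]]] := @Gch n cl G' sw [:: a; b; c; d] a isT U VV E.
move: hk hl hkl hadj G.
by do 4?[case: kk => [|kk] //]; do 4?[case: l => [|l] //]; move=> /= *; have gs := @Gsym n cl G' sw; auto.
Qed.

Lemma in2l (T : choiceType) (a b : T) : a \in [fset a; b].
Proof. by rewrite !inE eqxx. Qed.
Lemma in2r (T : choiceType) (a b : T) : b \in [fset a; b].
Proof. by rewrite !inE eqxx orbT. Qed.
Lemma notin2 (T : choiceType) (x a b : T) : x != a -> x != b -> x \notin [fset a; b].
Proof. by move=> h1 h2; rewrite !inE negb_or h1 h2. Qed.
Lemma neq_of (x : elt) (P Q : vtx) : x \in P -> x \notin Q -> P != Q.
Proof. by move=> hP hQ; apply/eqP => E; move: hQ; rewrite -E hP. Qed.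
Lemma uniq4 (T : eqType) (a b c d : T) : a != b -> a != c -> a != d -> b != c -> b != d -> c != d ->
  uniq [:: a; b; c; d].
Proof. by move=> *; rewrite /= !inE !negb_or; apply/and4P; split; try apply/and3P; try apply/andP. Qed.
Lemma pn_neq i : EAlpha (posv i) != EAlpha (negv i).
Proof. by apply/eqP; case. Qed.

Lemma crossS i j j' : 1 <= i <= n -> inDelta cl i j -> inDelta cl i j' ->
  G' (S j (posv i)) B -> G' (S j' (negv i)) B -> False.
Proof.
move=> hi hD hD' h1 h2.
have fSS : forb n cl (S j (posv i)) (S j' (negv i)).
  by left; right; right; left; exists i, j, j'.
have fAB := forb_AB cl hi.
have Va : QV n cl (S j (posv i)) := forb_QV fSS.
have Vc : QV n cl (S j' (negv i)) := forb_QV (forbC fSS).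
have Vb : QV n cl (A i) := forb_QV fAB.
have Vd : QV n cl B := forb_QV (forbC fAB).
have n1 : S j (posv i) != A i.
  by apply: (@neq_of (EBeta j (posv i))); [exact: in2r | apply: notin2; apply/eqP].
have n2 : S j (posv i) != S j' (negv i).
  by apply: (@neq_of (EAlpha (posv i))); [exact: in2l | apply: notin2; [exact: pn_neq|apply/eqP]].
have n3 : S j (posv i) != B.
  by apply: (@neq_of (EAlpha (posv i))); [exact: in2l | apply: notin2; apply/eqP].
have n4 : A i != S j' (negv i).
  by apply: (@neq_of (EAlpha (posv i))); [exact: in2l | apply: notin2; [exact: pn_neq|apply/eqP]].
have n5 : A i != B.
  by apply: (@neq_of (EAlpha (posv i))); [exact: in2l | apply: notin2; apply/eqP].
have n6 : S j' (negv i) != B.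
  by apply: (@neq_of (EAlpha (negv i))); [exact: in2l | apply: notin2; apply/eqP].
have U : uniq [:: S j (posv i); A i; S j' (negv i); B].
  exact: uniq4 n1 n2 n3 n4 n5 n6.
have e1 : G' (S j (posv i)) (A i).
  apply: (Gint sw); split; first exact: Va; split; first exact: Vb; split; first exact: n1.
  by apply: (@fsetI_neq0 _ (EAlpha (posv i))); [exact: in2l | exact: in2l].
have e2 : G' (A i) (S j' (negv i)).
  apply: (Gint sw); split; first exact: Vb; split; first exact: Vc; split; first exact: n4.
  by apply: (@fsetI_neq0 _ (EAlpha (negv i))); [exact: in2r | exact: in2l].
case: (cyc4v Va Vb Vc Vd U e1 e2 h2 (Gsym sw h1)).
- exact: (Gforb sw fSS).
- exact: (Gforb sw fAB).
Qed.
End Fin.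

Local Close Scope fset_scope.

Theorem lemma7 (n : nat) (cl : seq clause) (G' : vtx -> vtx -> Prop) :
  wf_instance n cl ->
  chordal_sandwich (QV n cl) (int_star n cl) (forb n cl) G' ->
  forall i, 1 <= i <= n ->
  (exists W, (W = posv i \/ W = negv i) /\
     forall j, inDelta cl i j -> G' (K cl j W) B)
  /\
  (forall j W, inDelta cl i j -> (W = posv i \/ W = negv i) ->
     G' (K cl j W) B ->
     forall P, (P = S j W \/ P = K cl j W \/ Lopt cl j W = Some P) ->
     forall R, (R = B \/ R = A i \/ R = H W \/ R = H (negl W) \/ R = F j) ->
     G' P R).
Proof.
move=> wf sw i hi.
have L := fun j (hD : inDelta cl i j) => local wf sw hD.
have Sb : forall j W, inDelta cl i j -> (W = posv i \/ W = negv i) -> G' (K cl j W) B -> G' (S j W) B.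
  move=> j W hD hW hK.
  exact: ((L j hD).2 W hW hK (S j W) (or_introl erefl) B (or_introl erefl)).
split; last first.
  move=> j W hD hW hK P HP R HR; exact: ((L j hD).2 W hW hK P HP R HR).
case: (classic (forall j, inDelta cl i j -> G' (K cl j (posv i)) B)) => [hall|hnot].
  by exists (posv i); split; [left|].
have [j0 [hD0 hK0]] : exists j0, inDelta cl i j0 /\ ~ G' (K cl j0 (posv i)) B.
  apply: NNPP => hne; apply: hnot => j hj; apply: NNPP => hK; apply: hne; by exists j.
have hN0 : G' (K cl j0 (negv i)) B.
  by case: (L j0 hD0).1 => h; [exfalso; exact: (hK0 h) | exact: h].
have S0 := Sb j0 (negv i) hD0 (or_intror erefl) hN0.
exists (negv i); split; first by right.
move=> j hD; apply: NNPP => hN.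
have hP : G' (K cl j (posv i)) B.
  by case: (L j hD).1 => h; [exact: h | exfalso; exact: (hN h)].
have S1 := Sb j (posv i) hD (or_introl erefl) hP.
exact: (crossS sw hi hD hD0 S1 S0).
Qed.
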